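(* Let $k, n$ be integers with $2 \le k \le n$ and let $\xi$ be a transcendental real number. Then $$\lambda_n (\xi) \ge \frac{w_k^{\rm lead} (\xi) - n + k}{(k-1) w_k^{\rm lead} (\xi) + n}.$$ Furthermore, this inequality remains true with $w_k^{\rm lead}(\xi)$ replaced by $w_k(\xi)$ when $k=2$ or when $n = k+1$.
   Context: For an integer $n \ge 1$ and a real number $\xi$, $\lambda_n(\xi)$ denotes the supremum (possibly $+\infty$) of the real numbers $\lambda$ such that, for arbitrarily large real numbers $X$, the inequalities $0 < |x_0| \le X$, $\max_{1 \le m \le n} |x_0 \xi^m - x_m| \le X^{-\lambda}$ have a solution in integers $x_0, \ldots, x_n$. For an integer $k\ge1$, $w_k(\xi)$ denotes the supremum of the real numbers $w$ such that, for arbitrarily large real numbers $X$, the inequalities $0 < |x_k \xi^k + \cdots + x_1\xi + x_0| \le X^{-w}$, $\max_{0\le j\le k}|x_j| \le X$ have a solution in integers $x_0,\ldots,x_k$; $w_k^{\rm lead}(\xi)$ is defined in the same way but with the additional requirement that $|x_k| \ge |x_j|$ for all $0 \le j \le k-1$. When the relevant exponent $w$ is $+\infty$, the right-hand side $\frac{w-n+k}{(k-1)w+n}$ is interpreted as its limit $1/(k-1)$. *)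

(* Defs.v *)
From Stdlib Require Import Reals ZArith.
From Coquelicot Require Import Coquelicot.
Open Scope R_scope.

Definition transcendental (xi : R) : Prop :=
  forall (d : nat) (c : nat -> Z),
    (exists i : nat, (i <= d)%nat /\ c i <> 0%Z) ->
    sum_f_R0 (fun i => IZR (c i) * xi ^ i) d <> 0.

Definition lambda_set (n : nat) (xi : R) (lam : R) : Prop :=
  forall X0 : R, exists X : R, X0 <= X /\
    exists x : nat -> Z,
      0 < Rabs (IZR (x 0%nat)) /\ Rabs (IZR (x 0%nat)) <= X /\
      forall m : nat, (1 <= m <= n)%nat ->
        Rabs (IZR (x 0%nat) * xi ^ m - IZR (x m)) <= Rpower X (- lam).

Definition lambda_exp (n : nat) (xi : R) : Rbar := Lub_Rbar (lambda_set n xi).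

Definition w_set (lead : bool) (k : nat) (xi : R) (w : R) : Prop :=
  forall X0 : R, exists X : R, X0 <= X /\
    exists x : nat -> Z,
      0 < Rabs (sum_f_R0 (fun j => IZR (x j) * xi ^ j) k) /\
      Rabs (sum_f_R0 (fun j => IZR (x j) * xi ^ j) k) <= Rpower X (- w) /\
      (forall j : nat, (j <= k)%nat -> Rabs (IZR (x j)) <= X) /\
      (lead = true -> forall j : nat, (j < k)%nat -> Rabs (IZR (x j)) <= Rabs (IZR (x k))).

Definition w_exp (k : nat) (xi : R) : Rbar := Lub_Rbar (w_set false k xi).
Definition w_lead_exp (k : nat) (xi : R) : Rbar := Lub_Rbar (w_set true k xi).

(* The right-hand side (w - n + k) / ((k-1) w + n), interpreted as its limit
   1/(k-1) when w is infinite. *)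
Definition rhs (k n : nat) (w : Rbar) : Rbar :=
  match w with
  | Finite w => Finite ((w - INR n + INR k) / ((INR k - 1) * w + INR n))
  | _ => Finite (1 / (INR k - 1))
  end.

(* Main.v *)
Require Import Defs.
From Stdlib Require Import Reals ZArith Lia Lra Psatz Classical List.
From Coquelicot Require Import Coquelicot.
Open Scope R_scope.

Lemma php1 : forall T (g : nat -> nat), (forall t, (t <= T)%nat -> (g t < T)%nat) ->
  exists t1 t2, (t1 < t2 <= T)%nat /\ g t1 = g t2.
Proof.
  induction T as [|T IH]; intros g Hg.
  - specialize (Hg 0%nat (le_n 0)). lia.
  - destruct (classic (exists t, (t <= T)%nat /\ g t = g (S T))) as [[t [Ht Hgt]]|Hno].
    + exists t, (S T). split; [lia|exact Hgt].
    + set (h := fun t => if Nat.eqb (g t) T then g (S T) else g t).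
      assert (Hh : forall t, (t <= T)%nat -> (h t < T)%nat).
      { intros t Ht. unfold h. destruct (Nat.eqb_spec (g t) T) as [E|E].
        - assert (g (S T) <> T). { intro E2. apply Hno. exists t. split; [exact Ht| lia]. }
          specialize (Hg (S T) (le_n _)). lia.
        - specialize (Hg t ltac:(lia)). lia. }
      destruct (IH h Hh) as [t1 [t2 [Ht Heq]]].
      exists t1, t2. split; [lia|]. unfold h in Heq.
      destruct (Nat.eqb_spec (g t1) T) as [E1|E1]; destruct (Nat.eqb_spec (g t2) T) as [E2|E2].
      * lia.
      * exfalso. apply Hno. exists t2. split; [lia| lia].
      * exfalso. apply Hno. exists t1. split; [lia| lia].
      * exact Heq.
Qed.

Fixpoint prodb (b : nat -> nat) (L : nat) : nat :=
  match L with O => 1%nat | S L' => (b L' * prodb b L')%nat end.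
Fixpoint code (b : nat -> nat) (f : nat -> nat) (L : nat) : nat :=
  match L with O => 0%nat | S L' => (f L' + b L' * code b f L')%nat end.

Lemma code_lt b f L : (forall i, (i < L)%nat -> (f i < b i)%nat) -> (code b f L < prodb b L)%nat.
Proof.
  induction L as [|L IH]; intros H; simpl; [lia|].
  assert (H1 := IH (fun i Hi => H i ltac:(lia))). assert (H2 := H L ltac:(lia)). nia.
Qed.

Lemma divmod_uniq (a a' b c c' : nat) : (a + b * c = a' + b * c')%nat -> (a < b)%nat -> (a' < b)%nat -> a = a' /\ c = c'.
Proof.
  intros E Ha Ha'. assert (c = c').
  { destruct (Nat.lt_trichotomy c c') as [Hl|[Hl|Hl]]; [|exact Hl|]; exfalso; nia. }
  subst; lia.
Qed.

Lemma code_inj b f g L : (forall i, (i < L)%nat -> (f i < b i)%nat /\ (g i < b i)%nat) ->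
  code b f L = code b g L -> forall i, (i < L)%nat -> f i = g i.
Proof.
  induction L as [|L IH]; intros H E i Hi; [lia|]. simpl in E.
  destruct (H L ltac:(lia)) as [H1 H2].
  destruct (divmod_uniq _ _ _ _ _ E H1 H2) as [E1 E2].
  destruct (Nat.eq_dec i L) as [->|Hne]; [exact E1|].
  apply IH; [intros j Hj; apply H; lia| exact E2 | lia].
Qed.

Lemma php_vec L b (f : nat -> nat -> nat) T : (prodb b L <= T)%nat ->
  (forall t i, (t <= T)%nat -> (i < L)%nat -> (f t i < b i)%nat) ->
  exists t1 t2, (t1 < t2 <= T)%nat /\ forall i, (i < L)%nat -> f t1 i = f t2 i.
Proof.
  intros HT Hf.
  destruct (php1 T (fun t => code b (f t) L)) as [t1 [t2 [Ht E]]].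
  { intros t Ht. assert (H := code_lt b (f t) L (fun i Hi => Hf t i Ht Hi)). lia. }
  exists t1, t2. split; [exact Ht|].
  apply (code_inj b (f t1) (f t2) L); [|exact E].
  intros i Hi; split; apply Hf; lia.
Qed.

Fixpoint zsum (g : nat -> Z) (k : nat) : Z :=
  match k with O => g O | S k' => (zsum g k' + g (S k'))%Z end.
Lemma zsum_IZR g k : IZR (zsum g k) = sum_f_R0 (fun i => IZR (g i)) k.
Proof. induction k; simpl; [reflexivity|]. rewrite plus_IZR, IHk. reflexivity. Qed.

Definition rho (xi : R) (n : nat) := (Rmax 1 (Rabs xi)) ^ n.
Lemma rho_ge1 xi n : 1 <= rho xi n.
Proof. unfold rho. apply pow_R1_Rle. apply Rmax_l. Qed.
Lemma pow_le_rho xi n j : (j <= n)%nat -> Rabs (xi ^ j) <= rho xi n.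
Proof.
  intros Hj. unfold rho. rewrite <- RPow_abs.
  apply Rle_trans with (Rmax 1 (Rabs xi) ^ j).
  - apply pow_incr. split; [apply Rabs_pos| apply Rmax_r].
  - apply Rle_pow; [apply Rmax_l| exact Hj].
Qed.

Lemma Int_part_bounds r : IZR (Int_part r) <= r /\ r - 1 < IZR (Int_part r).
Proof. destruct (base_Int_part r) as [H1 H2]. split; lra. Qed.

Lemma Int_part_nonneg r : 0 <= r -> (0 <= Int_part r)%Z.
Proof.
  intros Hr. destruct (Int_part_bounds r) as [_ H2].
  assert (-1 < IZR (Int_part r)) by lra.
  apply lt_IZR in H. lia.
Qed.

Lemma Int_part_lt r (K : Z) : r < IZR K -> (Int_part r < K)%Z.
Proof.
  intros Hr. destruct (Int_part_bounds r) as [H1 _].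
  apply lt_IZR. lra.
Qed.

Lemma Int_part_same r1 r2 : Int_part r1 = Int_part r2 -> Rabs (r1 - r2) < 1.
Proof.
  intros E. destruct (Int_part_bounds r1); destruct (Int_part_bounds r2).
  rewrite E in *. apply Rabs_def1; lra.
Qed.

Lemma sum_le_const (g : nat -> R) (c : R) k : (forall i, (i <= k)%nat -> g i <= c) -> sum_f_R0 g k <= c * INR (S k).
Proof.
  intros H. rewrite <- sum_cte. apply sum_Rle. intros; apply H; lia.
Qed.

Lemma sum_abs_le (g : nat -> R) k : Rabs (sum_f_R0 g k) <= sum_f_R0 (fun i => Rabs (g i)) k.
Proof. apply sum_f_R0_triangle. Qed.

Lemma prodb_ext b b' L : (forall i, (i < L)%nat -> b i = b' i) -> prodb b L = prodb b' L.
Proof. induction L; intros H; simpl; [reflexivity|]. rewrite H by lia. rewrite IHL; [reflexivity|]. intros; apply H; lia. Qed.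

Lemma prodb_const K L : prodb (fun _ => K) L = (K ^ L)%nat.
Proof. induction L; simpl; [reflexivity|]. rewrite IHL. reflexivity. Qed.

Lemma prodb_piece f N K V : prodb (fun i => if Nat.ltb i f then K else V) (f + N) = (K ^ f * V ^ N)%nat.
Proof.
  induction N as [|N IH].
  - rewrite Nat.add_0_r. simpl. rewrite Nat.mul_1_r.
    rewrite (prodb_ext _ (fun _ => K)); [apply prodb_const|].
    intros i Hi. apply Nat.ltb_lt in Hi. rewrite Hi. reflexivity.
  - rewrite Nat.add_succ_r. simpl. rewrite IH.
    replace (Nat.ltb (f + N) f) with false by (symmetry; apply Nat.ltb_ge; lia).
    simpl. lia.
Qed.

Definition poly (a : nat -> Z) (k : nat) (x : R) := sum_f_R0 (fun i => IZR (a i) * x ^ i) k.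
Definition Approx (xi : R) (n : nat) (eps Y : R) := exists x : nat -> Z,
  0 < Rabs (IZR (x 0%nat)) /\ Rabs (IZR (x 0%nat)) <= Y /\
  forall m, (1 <= m <= n)%nat -> Rabs (IZR (x 0%nat) * xi ^ m - IZR (x m)) <= eps.

Definition Stab xi n k a (F : list nat) (H : nat) C := forall (e : nat -> R) (s eta : R),
  e 0%nat = 0 -> 0 <= eta ->
  (forall j, (j <= n - k)%nat -> sum_f_R0 (fun i => IZR (a i) * e (i + j)%nat) k = - (s * xi ^ j * poly a k xi)) ->
  (forall m, In m F -> Rabs (e m) <= eta) ->
  forall m, (1 <= m <= n)%nat -> Rabs (e m) <= C * (eta + Rabs s * Rabs (poly a k xi) / INR H).

Section E.
Variables (xi : R) (n k : nat) (a : nat -> Z) (H B : nat) (F : list nat) (C : R) (K : nat).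
Hypotheses (Hkn : (1 <= k <= n)%nat) (HH : (1 <= H)%nat) (HB : (1 <= B)%nat) (HC : 0 <= C) (HK : (1 <= K)%nat)
  (Ha : forall i, (i <= k)%nat -> Rabs (IZR (a i)) <= INR (B * H))
  (HF : forall m, In m F -> (1 <= m <= n)%nat)
  (HS : Stab xi n k a F H C).

Let u (t m : nat) : Z := if Nat.eqb m 0 then Z.of_nat t else Int_part (INR t * xi ^ m).
Let e (t m : nat) : R := IZR (u t m) - INR t * xi ^ m.
Let z (t j : nat) : Z := zsum (fun i => (a i * u t (i + j))%Z) k.

Lemma e0 t : e t 0 = 0.
Proof. unfold e, u. simpl. rewrite <- INR_IZR_INZ. ring. Qed.

Lemma e_bd t m : -1 < e t m <= 0.
Proof.
  unfold e, u. destruct (Nat.eqb_spec m 0) as [->|Hm].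
  - simpl. rewrite <- INR_IZR_INZ. lra.
  - destruct (Int_part_bounds (INR t * xi ^ m)). lra.
Qed.

Lemma z_eq t j : IZR (z t j) = sum_f_R0 (fun i => IZR (a i) * e t (i + j)%nat) k + INR t * xi ^ j * poly a k xi.
Proof.
  unfold z. rewrite zsum_IZR. unfold poly.
  rewrite (sum_eq _ (fun i => IZR (a i) * e t (i + j)%nat + (IZR (a i) * xi ^ i) * (INR t * xi ^ j))).
  - rewrite sum_plus, scal_sum. ring.
  - intros i _. rewrite mult_IZR. unfold e. rewrite pow_add. ring.
Qed.

Lemma z_bd t j : (INR t * rho xi n * Rabs (poly a k xi) <= INR H) -> (j <= n - k)%nat ->
  (Z.abs (z t j) <= Z.of_nat ((k + 2) * B * H))%Z.
Proof.
  intros Ht Hj. apply le_IZR. rewrite abs_IZR, <- INR_IZR_INZ, z_eq.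
  eapply Rle_trans; [apply Rabs_triang|].
  assert (H1 : Rabs (sum_f_R0 (fun i => IZR (a i) * e t (i + j)%nat) k) <= INR (B * H) * INR (S k)).
  { eapply Rle_trans; [apply sum_abs_le|]. apply sum_le_const. intros i Hi.
    rewrite Rabs_mult. destruct (e_bd t (i + j)).
    assert (Rabs (e t (i+j)%nat) <= 1) by (apply Rabs_le; lra).
    assert (0 <= Rabs (IZR (a i))) by apply Rabs_pos.
    specialize (Ha i Hi). nra. }
  assert (H2 : Rabs (INR t * xi ^ j * poly a k xi) <= INR H).
  { rewrite !Rabs_mult. rewrite (Rabs_right (INR t)) by (apply Rle_ge, pos_INR).
    assert (Rabs (xi ^ j) <= rho xi n) by (apply pow_le_rho; lia).
    assert (0 <= INR t) by apply pos_INR. assert (0 <= Rabs (poly a k xi)) by apply Rabs_pos.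
    assert (0 <= Rabs (xi ^ j)) by apply Rabs_pos.
    eapply Rle_trans; [|exact Ht].
    replace (INR t * Rabs (xi ^ j) * Rabs (poly a k xi)) with ((INR t * Rabs (poly a k xi)) * Rabs (xi ^ j)) by ring.
    replace (INR t * rho xi n * Rabs (poly a k xi)) with ((INR t * Rabs (poly a k xi)) * rho xi n) by ring.
    apply Rmult_le_compat_l; [apply Rmult_le_pos|]; assumption. }
  assert (INR (B * H) * INR (S k) + INR H <= INR ((k + 2) * B * H)).
  { rewrite !mult_INR, !plus_INR, S_INR. simpl.
    assert (1 <= INR B) by (apply (le_INR 1); lia). assert (1 <= INR H) by (apply (le_INR 1); lia).
    assert (0 <= INR k) by apply pos_INR. nra. }
  lra.
Qed.

Theorem engine :
  let T := (K ^ length F * (2 * (k + 2) * B * H + 1) ^ (n - k + 1))%nat in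
  INR T * rho xi n * Rabs (poly a k xi) <= INR H ->
  Approx xi n (C * (/ INR K + INR T * Rabs (poly a k xi) / INR H)) (INR T).
Proof.
  intros T HT.
  set (f := length F). set (N := (n - k + 1)%nat). set (V0 := ((k + 2) * B * H)%nat).
  set (lab := fun t i => if Nat.ltb i f then Z.to_nat (Int_part (- INR K * e t (nth i F 0%nat)))
                          else Z.to_nat (z t (i - f)%nat + Z.of_nat V0)).
  set (b := fun i : nat => if Nat.ltb i f then K else (2 * V0 + 1)%nat).
  assert (Hprod : prodb b (f + N) = T).
  { unfold b, T. rewrite prodb_piece. fold f N. f_equal. f_equal. unfold V0. lia. }
  assert (HKpos : 0 < INR K) by (apply (lt_INR 0); lia).
  assert (Hlab : forall t i, (t <= T)%nat -> (i < f + N)%nat -> (lab t i < b i)%nat).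
  { intros t i Ht Hi. unfold lab, b. destruct (Nat.ltb_spec i f) as [Hif|Hif].
    - assert (Hm : In (nth i F 0%nat) F) by (apply nth_In; exact Hif).
      destruct (e_bd t (nth i F 0%nat)) as [Hl Hu].
      assert (Hm1 := HF _ Hm).
      assert (Hne : -1 < e t (nth i F 0%nat)) by exact Hl.
      assert (0 <= - INR K * e t (nth i F 0%nat)) by nra.
      assert (- INR K * e t (nth i F 0%nat) < IZR (Z.of_nat K)) by (rewrite <- INR_IZR_INZ; nra).
      assert (J1 := Int_part_nonneg _ H0). assert (J2 := Int_part_lt _ _ H1). lia.
    - assert (Hzb : (Z.abs (z t (i - f)%nat) <= Z.of_nat V0)%Z).
      { apply z_bd; [|unfold N in Hi; lia].
        eapply Rle_trans; [|exact HT].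
        assert (INR t <= INR T) by (apply le_INR; exact Ht).
        assert (0 <= rho xi n * Rabs (poly a k xi)) by (apply Rmult_le_pos; [pose proof (rho_ge1 xi n); lra| apply Rabs_pos]).
        rewrite !Rmult_assoc. apply Rmult_le_compat_r; [exact H1| exact H0]. }
      lia. }
  assert (HprodT : (prodb b (f + N) <= T)%nat) by lia.
  destruct (php_vec (f + N) b lab T HprodT Hlab) as [t1 [t2 [Ht12 Heq]]].
  set (x := fun m => (u t2 m - u t1 m)%Z).
  assert (Hx0 : IZR (x 0%nat) = INR t2 - INR t1).
  { unfold x, u. simpl. rewrite minus_IZR, <- !INR_IZR_INZ. reflexivity. }
  assert (Hlt : INR t1 < INR t2) by (apply lt_INR; lia).
  assert (HtT : INR t2 <= INR T) by (apply le_INR; lia).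
  assert (Ht1 : 0 <= INR t1) by apply pos_INR.
  set (ee := fun m => IZR (x m) - IZR (x 0%nat) * xi ^ m).
  assert (Hee : forall m, ee m = e t2 m - e t1 m).
  { intros m. unfold ee. rewrite Hx0. unfold x, e. rewrite minus_IZR. ring. }
  exists x. split; [|split].
  - rewrite Hx0, Rabs_right; lra.
  - rewrite Hx0, Rabs_right; lra.
  - intros m Hm.
    assert (Hstab := HS ee (IZR (x 0%nat)) (/ INR K)).
    assert (Hfin : Rabs (ee m) <= C * (/ INR K + Rabs (IZR (x 0%nat)) * Rabs (poly a k xi) / INR H)).
    { apply Hstab; [| left; apply Rinv_0_lt_compat; exact HKpos | | | exact Hm].
      - rewrite Hee, !e0. ring.
      - intros j Hj.
        assert (Hzj : z t1 j = z t2 j).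
        { assert (Hl := Heq (f + j)%nat ltac:(unfold N; lia)). unfold lab in Hl.
          replace (Nat.ltb (f + j) f) with false in Hl by (symmetry; apply Nat.ltb_ge; lia).
          replace (f + j - f)%nat with j in Hl by lia.
          assert (B1 : (Z.abs (z t1 j) <= Z.of_nat V0)%Z).
          { apply z_bd; [|lia]. eapply Rle_trans; [|exact HT].
            assert (0 <= rho xi n * Rabs (poly a k xi)) by (apply Rmult_le_pos; [pose proof (rho_ge1 xi n); lra| apply Rabs_pos]).
            rewrite !Rmult_assoc. apply Rmult_le_compat_r; lra. }
          assert (B2 : (Z.abs (z t2 j) <= Z.of_nat V0)%Z).
          { apply z_bd; [|lia]. eapply Rle_trans; [|exact HT].
            assert (0 <= rho xi n * Rabs (poly a k xi)) by (apply Rmult_le_pos; [pose proof (rho_ge1 xi n); lra| apply Rabs_pos]).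
            rewrite !Rmult_assoc. apply Rmult_le_compat_r; lra. }
          lia. }
        rewrite (sum_eq _ (fun i => IZR (a i) * e t2 (i + j)%nat - IZR (a i) * e t1 (i + j)%nat)).
        + rewrite minus_sum.
          assert (E1 := z_eq t1 j). assert (E2 := z_eq t2 j). rewrite Hzj in E1.
          rewrite Hx0. lra.
        + intros i _. rewrite Hee. ring.
      - intros m' Hm'. destruct (In_nth F m' 0%nat Hm') as [i [Hi Hni]].
        assert (Hl := Heq i ltac:(fold f in Hi; lia)). unfold lab in Hl.
        fold f in Hi. replace (Nat.ltb i f) with true in Hl by (symmetry; apply Nat.ltb_lt; lia).
        rewrite Hni in Hl.
        assert (Hm1 := HF _ Hm').
        destruct (e_bd t1 m'); destruct (e_bd t2 m').
        assert (P1 : 0 <= - INR K * e t1 m') by nra.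
        assert (P2 : 0 <= - INR K * e t2 m') by nra.
        assert (Q1 := Int_part_nonneg _ P1). assert (Q2 := Int_part_nonneg _ P2).
        assert (Hip : Int_part (- INR K * e t1 m') = Int_part (- INR K * e t2 m')) by lia.
        assert (Hd := Int_part_same _ _ Hip).
        rewrite Hee.
        replace (- INR K * e t1 m' - - INR K * e t2 m') with (INR K * (e t2 m' - e t1 m')) in Hd by ring.
        rewrite Rabs_mult, (Rabs_right (INR K)) in Hd by lra.
        apply Rmult_le_reg_l with (INR K); [exact HKpos|].
        rewrite Rinv_r by lra. lra. }
    replace (IZR (x 0%nat) * xi ^ m - IZR (x m)) with (- ee m) by (unfold ee; ring).
    rewrite Rabs_Ropp. eapply Rle_trans; [exact Hfin|].
    apply Rmult_le_compat_l; [exact HC|]. apply Rplus_le_compat_l.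
    assert (0 < INR H) by (apply (lt_INR 0); lia).
    unfold Rdiv. apply Rmult_le_compat_r; [left; apply Rinv_0_lt_compat; lra|].
    apply Rmult_le_compat_r; [apply Rabs_pos|]. rewrite Hx0, Rabs_right; lra.
Qed.
End E.

Lemma pow_ge1_mono (G : R) m m' : 1 <= G -> (m <= m')%nat -> G ^ m <= G ^ m'.
Proof. intros; apply Rle_pow; assumption. Qed.

Lemma stab_lead xi n k a (H B : nat) :
  (1 <= k <= n)%nat -> (1 <= H)%nat -> (1 <= B)%nat ->
  Rabs (IZR (a k)) = INR H ->
  (forall i, (i <= k)%nat -> Rabs (IZR (a i)) <= INR (B * H)) ->
  Stab xi n k a (seq 1 (k - 1)) H ((INR (k * B + 1)) ^ n * rho xi n).
Proof.
  intros Hkn HH HB Hak Ha e s eta He0 Heta Hrel Hfree m Hm.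
  set (G := INR (k * B + 1)). set (d := Rabs (poly a k xi)).
  assert (HHpos : 0 < INR H) by (apply (lt_INR 0); lia).
  assert (HG : 1 <= G) by (unfold G; apply (le_INR 1); lia).
  assert (Hrho := rho_ge1 xi n).
  assert (Hd : 0 <= d) by apply Rabs_pos.
  set (S0 := eta + Rabs s * rho xi n * d / INR H).
  assert (HS0a : Rabs s * rho xi n * d / INR H <= S0) by (unfold S0; lra).
  assert (HS0b : 0 <= Rabs s * rho xi n * d / INR H).
  { unfold Rdiv. apply Rmult_le_pos; [|left; apply Rinv_0_lt_compat; lra].
    apply Rmult_le_pos; [apply Rmult_le_pos; [apply Rabs_pos|lra]|lra]. }
  assert (HS0 : 0 <= S0) by (unfold S0; lra).
  assert (Main : forall m, (m <= n)%nat -> Rabs (e m) <= G ^ m * S0).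
  { intros m0. induction m0 as [m0 IH] using (well_founded_induction lt_wf). intros Hm0.
    destruct (Nat.eq_dec m0 0) as [->|Hm00].
    - rewrite He0, Rabs_R0. simpl. lra.
    - destruct (Nat.lt_ge_cases m0 k) as [Hlt|Hge].
      + assert (Rabs (e m0) <= eta) by (apply Hfree; apply in_seq; lia).
        assert (1 <= G ^ m0) by (apply pow_R1_Rle; lra).
        unfold S0 in *. nra.
      + set (j := (m0 - k)%nat).
        assert (Hr := Hrel j ltac:(unfold j; lia)).
        replace k with (S (k - 1)) in Hr at 1 by lia.
        rewrite tech5 in Hr.
        replace (S (k - 1)) with k in Hr by lia.
        replace (k + j)%nat with m0 in Hr by (unfold j; lia).
        set (Sm := sum_f_R0 (fun i => IZR (a i) * e (i + j)%nat) (k - 1)) in Hr.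
        assert (HSm : Rabs Sm <= INR k * (INR (B * H) * (G ^ (m0 - 1) * S0))).
        { eapply Rle_trans; [apply sum_abs_le|].
          replace (INR k) with (INR (S (k - 1))) by (f_equal; lia).
          rewrite Rmult_comm. apply sum_le_const. intros i Hi.
          rewrite Rabs_mult. apply Rmult_le_compat; [apply Rabs_pos|apply Rabs_pos| apply Ha; lia|].
          eapply Rle_trans; [apply IH; unfold j; lia|].
          apply Rmult_le_compat_r; [lra|]. apply Rle_pow; [lra|unfold j; lia]. }
        assert (Hxj : Rabs (s * xi ^ j * poly a k xi) <= Rabs s * rho xi n * d).
        { rewrite !Rabs_mult. fold d. apply Rmult_le_compat_r; [lra|].
          apply Rmult_le_compat_l; [apply Rabs_pos|]. apply pow_le_rho. unfold j; lia. }
        assert (Hem : INR H * Rabs (e m0) <= Rabs s * rho xi n * d + Rabs Sm).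
        { rewrite <- Hak, <- Rabs_mult.
          replace (IZR (a k) * e m0) with (- (s * xi ^ j * poly a k xi) - Sm) by lra.
          eapply Rle_trans; [apply Rabs_triang|]. rewrite !Rabs_Ropp. lra. }
        assert (Hem2 : Rabs (e m0) <= Rabs s * rho xi n * d / INR H + INR k * INR B * (G ^ (m0 - 1) * S0)).
        { apply Rmult_le_reg_l with (INR H); [lra|].
          rewrite Rmult_plus_distr_l. unfold Rdiv.
          replace (INR H * (Rabs s * rho xi n * d * / INR H)) with (Rabs s * rho xi n * d) by (field; lra).
          rewrite mult_INR in HSm. nra. }
        assert (HGm : G ^ m0 = G * G ^ (m0 - 1)).
        { replace m0 with (S (m0 - 1)) at 1 by lia. simpl. reflexivity. }
        rewrite HGm.
        assert (1 <= G ^ (m0 - 1)) by (apply pow_R1_Rle; lra).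
        assert (HGk : G = INR k * INR B + 1) by (unfold G; rewrite plus_INR, mult_INR; simpl; ring).
        rewrite HGk in *.
        assert (0 <= INR k * INR B) by (apply Rmult_le_pos; apply pos_INR).
        nra. }
  eapply Rle_trans; [apply Main; lia|].
  assert (G ^ m <= G ^ n) by (apply Rle_pow; [lra|lia]).
  assert (0 <= G ^ m) by (apply pow_le; lra).
  assert (S0 <= rho xi n * (eta + Rabs s * d / INR H)).
  { unfold S0. assert (0 <= Rabs s * d / INR H).
    { unfold Rdiv. apply Rmult_le_pos; [apply Rmult_le_pos; [apply Rabs_pos|lra]|left; apply Rinv_0_lt_compat; lra]. }
    replace (Rabs s * rho xi n * d / INR H) with (rho xi n * (Rabs s * d / INR H)) by (field; lra). nra. }
  fold d. rewrite Rmult_assoc.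
  apply Rle_trans with (G ^ n * S0); [apply Rmult_le_compat_r; lra|].
  apply Rmult_le_compat_l; [apply pow_le; lra| lra].
Qed.

Lemma Approx_mono xi n e e' Y Y' : e <= e' -> Y <= Y' -> Approx xi n e Y -> Approx xi n e' Y'.
Proof.
  intros He HY [x [H1 [H2 H3]]]. exists x. split; [exact H1|split; [lra|]].
  intros m Hm. specialize (H3 m Hm). lra.
Qed.

Lemma engine_approx xi n k B cd CE w f :
  (1 <= k <= n)%nat -> (1 <= B)%nat -> 0 < cd -> 0 <= CE ->
  exists C c2, 1 <= C /\ 0 < c2 /\
  forall X a H F, 1 <= X -> (1 <= H)%nat -> INR H <= X ->
    (forall i, (i <= k)%nat -> Rabs (IZR (a i)) <= INR (B * H)) ->
    (forall m, In m F -> (1 <= m <= n)%nat) -> (length F <= f)%nat ->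
    Stab xi n k a F H CE ->
    Rabs (poly a k xi) <= cd * Rpower X (- w) ->
    forall K : nat, (1 <= K)%nat -> c2 * INR K ^ (f + 1) <= Rpower X (w - INR (n - k)) ->
    Approx xi n (C / INR K) (C * INR K ^ f * X ^ (n - k + 1)).
Proof.
  intros Hkn HB Hcd HCE.
  set (N := (n - k + 1)%nat).
  set (cV := INR (2 * (k + 2) * B + 1)).
  assert (HcV : 1 <= cV) by (unfold cV; apply (le_INR 1); lia).
  assert (HcVN : 1 <= cV ^ N) by (apply pow_R1_Rle; lra).
  assert (Hrho := rho_ge1 xi n).
  exists (Rmax 1 (Rmax (2 * CE) (cV ^ N))), (cV ^ N * cd * rho xi n).
  split; [apply Rmax_l|split].
  { apply Rmult_lt_0_compat; [apply Rmult_lt_0_compat|]; lra. }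
  intros X a H F HX HH HHX Ha HF HlF HS Hd K HK HK2.
  set (d := Rabs (poly a k xi)) in *.
  set (T := (K ^ length F * (2 * (k + 2) * B * H + 1) ^ (n - k + 1))%nat).
  assert (HKpos : 1 <= INR K) by (apply (le_INR 1); lia).
  assert (HHpos : 1 <= INR H) by (apply (le_INR 1); lia).
  assert (HTr : INR T <= INR K ^ f * (cV ^ N * INR H ^ N)).
  { unfold T. rewrite mult_INR, !pow_INR. fold N.
    apply Rmult_le_compat; [apply pow_le; lra| apply pow_le; apply pos_INR| apply Rle_pow; [lra|exact HlF]|].
    rewrite <- Rpow_mult_distr. apply pow_incr. split; [apply pos_INR|].
    unfold cV. rewrite !plus_INR, !mult_INR. simpl.
    assert (0 <= INR k) by apply pos_INR. assert (1 <= INR B) by (apply (le_INR 1); lia). nra. }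
  assert (Hd0 : 0 <= d) by apply Rabs_pos.
  assert (HXpos : 0 < X) by lra.
  assert (Hg : Rpower X (w - INR (n - k)) * (INR H ^ (n - k) * d) <= cd).
  { apply Rle_trans with (Rpower X (w - INR (n - k)) * (X ^ (n - k) * (cd * Rpower X (- w)))).
    - apply Rmult_le_compat_l; [left; apply exp_pos|].
      apply Rmult_le_compat; [apply pow_le; lra| exact Hd0| apply pow_incr; lra| exact Hd].
    - rewrite <- Rpower_pow by lra.
      replace (Rpower X (w - INR (n - k)) * (Rpower X (INR (n - k)) * (cd * Rpower X (- w))))
        with (cd * (Rpower X (w - INR (n - k)) * Rpower X (INR (n - k)) * Rpower X (- w))) by ring.
      rewrite <- !Rpower_plus. replace (w - INR (n - k) + INR (n - k) + - w) with 0 by ring.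
      rewrite Rpower_O by lra. lra. }
  assert (HNH : INR H ^ N = INR H * INR H ^ (n - k)).
  { unfold N. replace (n - k + 1)%nat with (S (n - k)) by lia. reflexivity. }
  assert (Hkey : INR T * rho xi n * d / INR H <= / INR K).
  { set (R1 := Rpower X (w - INR (n - k))) in *.
    assert (HR1 : 0 < R1) by (unfold R1; apply exp_pos).
    apply Rle_trans with (INR K ^ f * cV ^ N * rho xi n * (INR H ^ (n - k) * d)).
    - unfold Rdiv. apply Rmult_le_reg_r with (INR H); [lra|].
      rewrite Rmult_assoc, Rinv_l, Rmult_1_r by lra.
      replace (INR K ^ f * cV ^ N * rho xi n * (INR H ^ (n - k) * d) * INR H)
        with ((INR K ^ f * (cV ^ N * (INR H * INR H ^ (n - k)))) * (rho xi n * d)) by ring.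
      rewrite <- HNH. rewrite Rmult_assoc. apply Rmult_le_compat_r; [apply Rmult_le_pos; lra| exact HTr].
    -
      assert (HKf : 0 < INR K ^ f) by (apply pow_lt; lra).
      rewrite pow_add, pow_1 in HK2.
      apply Rmult_le_reg_l with (R1 * INR K); [apply Rmult_lt_0_compat; lra|].
      replace (R1 * INR K * / INR K) with R1 by (field; lra).
      replace (R1 * INR K * (INR K ^ f * cV ^ N * rho xi n * (INR H ^ (n - k) * d)))
        with ((cV ^ N * rho xi n * (INR K ^ f * INR K)) * (R1 * (INR H ^ (n - k) * d))) by ring.
      apply Rle_trans with ((cV ^ N * rho xi n * (INR K ^ f * INR K)) * cd).
      + apply Rmult_le_compat_l; [|exact Hg]. apply Rmult_le_pos; [apply Rmult_le_pos|]; [lra|lra|].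
        apply Rmult_le_pos; lra.
      + replace (cV ^ N * rho xi n * (INR K ^ f * INR K) * cd) with (cV ^ N * cd * rho xi n * (INR K ^ f * INR K)) by ring.
        exact HK2. }
  assert (HT0 : 0 <= INR T) by apply pos_INR.
  assert (HTH : INR T * rho xi n * d <= INR H).
  { assert (/ INR K <= 1) by (rewrite <- Rinv_1; apply Rinv_le_contravar; lra).
    unfold Rdiv in Hkey. apply Rmult_le_reg_r with (/ INR H); [apply Rinv_0_lt_compat; lra|].
    rewrite Rinv_r by lra. lra. }
  assert (HE := engine xi n k a H B F CE K Hkn HH HB HCE HK Ha HF HS HTH).
  fold T in HE. fold d in HE.
  eapply Approx_mono; [| |exact HE].
  - assert (HTd : INR T * d / INR H <= / INR K).
    { eapply Rle_trans; [|exact Hkey]. unfold Rdiv. apply Rmult_le_compat_r; [left; apply Rinv_0_lt_compat; lra|].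
      assert (0 <= INR T * d) by (apply Rmult_le_pos; lra). nra. }
    apply Rle_trans with (2 * CE * / INR K).
    + assert (0 < / INR K) by (apply Rinv_0_lt_compat; lra). nra.
    + unfold Rdiv. apply Rmult_le_compat_r; [left; apply Rinv_0_lt_compat; lra|].
      eapply Rle_trans; [apply Rmax_l|apply Rmax_r].
  - eapply Rle_trans; [exact HTr|].
    assert (HN : INR H ^ N <= X ^ N) by (apply pow_incr; lra).
    assert (HC : cV ^ N <= Rmax 1 (Rmax (2 * CE) (cV ^ N))) by (eapply Rle_trans; [apply Rmax_r|apply Rmax_r]).
    fold N. assert (0 <= INR K ^ f) by (apply pow_le; lra).
    assert (0 <= INR H ^ N) by (apply pow_le; lra).
    replace (Rmax 1 (Rmax (2 * CE) (cV ^ N)) * INR K ^ f * X ^ N) with (INR K ^ f * (Rmax 1 (Rmax (2 * CE) (cV ^ N)) * X ^ N)) by ring.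
    apply Rmult_le_compat_l; [lra|]. apply Rmult_le_compat; lra.
Qed.

Lemma Rpower_pos x y : 0 < Rpower x y.
Proof. apply exp_pos. Qed.

Lemma Rpower_powR x b m : 0 < x -> (Rpower x b) ^ m = Rpower x (b * INR m).
Proof. intros Hx. rewrite <- Rpower_pow by apply Rpower_pos. rewrite Rpower_mult. reflexivity. Qed.

Lemma large_pow c g X : 0 < g -> 1 <= X -> Rpower (Rmax c 1) (/ g) <= X -> c <= Rpower X g.
Proof.
  intros Hg HX HM.
  apply Rle_trans with (Rmax c 1); [apply Rmax_l|].
  apply Rle_trans with (Rpower (Rpower (Rmax c 1) (/ g)) g).
  - rewrite Rpower_mult. rewrite Rinv_l by lra. rewrite Rpower_1; [lra|].
    apply Rlt_le_trans with 1; [lra|apply Rmax_r].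
  - apply Rle_Rpower_l; [lra|split; [apply Rpower_pos|exact HM]].
Qed.

Lemma final_analysis xi n f N g lam C c2 K1 :
  0 < g -> 0 < lam -> lam * (INR N * INR (f + 1) + g * INR f) < g -> 1 <= C -> 0 < c2 -> (1 <= N)%nat ->
  (forall X0, exists X, X0 <= X /\ 1 <= X /\ forall K : nat, (1 <= K)%nat -> K1 <= INR K ->
     c2 * INR K ^ (f + 1) <= Rpower X g -> Approx xi n (C / INR K) (C * INR K ^ f * X ^ N)) ->
  lambda_set n xi lam.
Proof.
  intros Hg Hl Hcond HC Hc2 HN Hyp X0.
  assert (HNf : 0 <= INR N * INR (f + 1)) by (apply Rmult_le_pos; apply pos_INR).
  assert (Hf0 : 0 <= INR f) by apply pos_INR.
  assert (Hlf : lam * INR f < 1).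
  { assert (lam * (g * INR f) < g) by nra. nra. }
  assert (Hf1 : INR (f + 1) = INR f + 1) by (rewrite plus_INR; simpl; ring).
  set (b1 := lam * INR N / (1 - lam * INR f)).
  set (b2 := g / (INR f + 1)).
  assert (Hb12 : b1 < b2).
  { unfold b1, b2. apply Rmult_lt_reg_r with ((1 - lam * INR f) * (INR f + 1)); [nra|].
    field_simplify; [|lra|lra]. rewrite Hf1 in Hcond. nra. }
  assert (Hb1 : 0 <= b1).
  { unfold b1. apply Rmult_le_pos; [apply Rmult_le_pos; [lra|apply pos_INR]|].
    left; apply Rinv_0_lt_compat; lra. }
  set (be := (b1 + b2) / 2).
  assert (Hbe : 0 < be) by (unfold be; lra).
  set (g1 := g - (INR f + 1) * be).
  set (g2 := be * (1 - lam * INR f) - lam * INR N).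
  assert (Hg1 : 0 < g1).
  { unfold g1. assert (be < b2) by (unfold be; lra). unfold b2 in H.
    apply Rmult_lt_compat_l with (r := INR f + 1) in H; [|lra].
    field_simplify in H; lra. }
  assert (Hg2 : 0 < g2).
  { unfold g2. assert (b1 < be) by (unfold be; lra). unfold b1 in H.
    apply Rmult_lt_compat_l with (r := 1 - lam * INR f) in H; [|lra].
    field_simplify in H; lra. }
  set (M1 := Rpower (Rmax (Rmax K1 1) 1) (/ be)).
  set (M2 := Rpower (Rmax (c2 * 2 ^ (f + 1)) 1) (/ g1)).
  set (M3 := Rpower (Rmax (C * Rpower (C * 2 ^ f) lam) 1) (/ g2)).
  destruct (Hyp (Rmax (Rmax X0 1) (Rmax M1 (Rmax M2 M3)))) as [X [HX0 [HX1 HXK]]].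
  assert (HXa : X0 <= X) by (eapply Rle_trans; [|exact HX0]; eapply Rle_trans; apply Rmax_l).
  assert (HM1 : M1 <= X) by (eapply Rle_trans; [|exact HX0]; eapply Rle_trans; [|apply Rmax_r]; apply Rmax_l).
  assert (HM2 : M2 <= X) by (eapply Rle_trans; [|exact HX0]; eapply Rle_trans; [|apply Rmax_r]; eapply Rle_trans; [|apply Rmax_r]; apply Rmax_l).
  assert (HM3 : M3 <= X) by (eapply Rle_trans; [|exact HX0]; eapply Rle_trans; [|apply Rmax_r]; eapply Rle_trans; [|apply Rmax_r]; apply Rmax_r).
  assert (HXpos : 0 < X) by lra.
  set (r := Rpower X be).
  assert (Hr1 : Rmax K1 1 <= r) by (apply large_pow; assumption).
  assert (Hr1' : 1 <= r) by (eapply Rle_trans; [apply Rmax_r|exact Hr1]).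
  assert (HK1r : K1 <= r) by (eapply Rle_trans; [apply Rmax_l|exact Hr1]).
  set (K := Z.to_nat (up r)).
  destruct (archimed r) as [Hup1 Hup2].
  assert (HupZ : (0 <= up r)%Z) by (apply le_IZR; lra).
  assert (HKr : INR K = IZR (up r)) by (unfold K; rewrite INR_IZR_INZ, Z2Nat.id by exact HupZ; reflexivity).
  assert (HK1 : (1 <= K)%nat).
  { destruct K as [|K']; [simpl in HKr; lra|lia]. }
  assert (HKlo : r < INR K) by lra.
  assert (HKhi : INR K <= 2 * r) by lra.
  assert (HKpos : 0 < INR K) by lra.
  assert (HKc : c2 * INR K ^ (f + 1) <= Rpower X g).
  { apply Rle_trans with (c2 * (2 * r) ^ (f + 1)).
    - apply Rmult_le_compat_l; [lra|]. apply pow_incr; lra.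
    - rewrite Rpow_mult_distr. unfold r. rewrite Rpower_powR by lra.
      assert (c2 * 2 ^ (f + 1) <= Rpower X g1) by (apply large_pow; assumption).
      replace g with (g1 + be * INR (f + 1)) by (unfold g1; rewrite Hf1; ring).
      rewrite Rpower_plus. rewrite <- Rmult_assoc.
      apply Rmult_le_compat_r; [left; apply Rpower_pos|exact H]. }
  destruct (HXK K HK1 (Rle_trans _ _ _ HK1r (Rlt_le _ _ HKlo)) HKc) as [x [Hx1 [Hx2 Hx3]]].
  set (Y := C * INR K ^ f * X ^ N).
  assert (HXN : X <= X ^ N).
  { replace N with (S (N - 1)) by lia. simpl. replace X with (X * 1) at 1 by ring.
    apply Rmult_le_compat_l; [lra|]. apply pow_R1_Rle; lra. }
  assert (HKf : 1 <= INR K ^ f) by (apply pow_R1_Rle; lra).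
  assert (HXN1 : 1 <= X ^ N) by lra.
  assert (HY : X <= Y).
  { unfold Y. apply Rle_trans with (1 * 1 * X ^ N); [lra|].
    apply Rmult_le_compat_r; [lra|]. apply Rmult_le_compat; lra. }
  exists Y. split; [lra|]. exists x. split; [exact Hx1|split; [exact Hx2|]].
  intros m Hm. eapply Rle_trans; [apply Hx3; exact Hm|].
  rewrite Rpower_Ropp.
  assert (HYpos : 0 < Y) by lra.
  set (Z0 := C * 2 ^ f * Rpower X (be * INR f + INR N)).
  assert (HYZ : Y <= Z0).
  { unfold Y, Z0. rewrite Rpower_plus, <- Rpower_powR, Rpower_pow by lra.
    fold r. replace (C * 2 ^ f * (r ^ f * X ^ N)) with (C * (2 * r) ^ f * X ^ N) by (rewrite Rpow_mult_distr; ring).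
    apply Rmult_le_compat_r; [lra|]. apply Rmult_le_compat_l; [lra|]. apply pow_incr; lra. }
  assert (HYl : Rpower Y lam <= Rpower Z0 lam) by (apply Rle_Rpower_l; lra).
  assert (HZ0 : Rpower Z0 lam = Rpower (C * 2 ^ f) lam * Rpower X (lam * (be * INR f + INR N))).
  { unfold Z0. rewrite <- Rpower_mult_distr; [| apply Rmult_lt_0_compat; [lra|apply pow_lt; lra] | apply Rpower_pos].
    rewrite Rpower_mult. f_equal. f_equal. ring. }
  assert (H3 : C * Rpower (C * 2 ^ f) lam <= Rpower X g2) by (apply large_pow; assumption).
  apply Rle_trans with (/ Rpower Z0 lam); [|apply Rinv_le_contravar; [apply Rpower_pos|exact HYl]].
  rewrite HZ0.
  assert (HP1 : 0 < Rpower (C * 2 ^ f) lam) by apply Rpower_pos.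
  assert (HP2 : 0 < Rpower X (lam * (be * INR f + INR N))) by apply Rpower_pos.
  unfold Rdiv. apply Rle_trans with (C * / r).
  - apply Rmult_le_compat_l; [lra|]. apply Rinv_le_contravar; lra.
  - assert (Hrr : r = Rpower X g2 * Rpower X (lam * (be * INR f + INR N))).
    { unfold r. rewrite <- Rpower_plus. f_equal. unfold g2. ring. }
    rewrite Hrr. rewrite Rinv_mult.
    apply Rmult_le_reg_r with (Rpower X g2 * Rpower X (lam * (be * INR f + INR N)) * Rpower (C * 2 ^ f) lam).
    { apply Rmult_lt_0_compat; [apply Rmult_lt_0_compat; [apply Rpower_pos|lra]|lra]. }
    assert (0 < Rpower X g2) by apply Rpower_pos.
    replace (C * (/ Rpower X g2 * / Rpower X (lam * (be * INR f + INR N))) *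
      (Rpower X g2 * Rpower X (lam * (be * INR f + INR N)) * Rpower (C * 2 ^ f) lam))
      with (C * Rpower (C * 2 ^ f) lam) by (field; lra).
    replace (/ (Rpower (C * 2 ^ f) lam * Rpower X (lam * (be * INR f + INR N))) *
      (Rpower X g2 * Rpower X (lam * (be * INR f + INR N)) * Rpower (C * 2 ^ f) lam))
      with (Rpower X g2) by (field; lra).
    exact H3.
Qed.

Lemma lam_nonpos n xi lam : lam <= 0 -> lambda_set n xi lam.
Proof.
  intros Hl X0. exists (Rmax X0 1). split; [apply Rmax_l|].
  exists (fun m => if Nat.eqb m 0 then 1%Z else Int_part (xi ^ m)). simpl.
  rewrite Rabs_R1. split; [lra|split; [apply Rmax_r|]].
  intros m Hm. destruct (Nat.eqb_spec m 0) as [E|E]; [lia|].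
  destruct (Int_part_bounds (xi ^ m)).
  apply Rle_trans with 1.
  - rewrite Rmult_1_l. apply Rabs_le. lra.
  - apply Rle_trans with (Rpower (Rmax X0 1) 0).
    + rewrite Rpower_O; [lra|]. apply Rlt_le_trans with 1; [lra|apply Rmax_r].
    + apply Rle_Rpower; [apply Rmax_r|lra].
Qed.

Lemma lub_ub (E : R -> Prop) w : E w -> Rbar_le (Finite w) (Lub_Rbar E).
Proof. intros Hw. destruct (Lub_Rbar_correct E) as [Hub _]. apply Hub. exact Hw. Qed.

Lemma get_w (E : R -> Prop) r : Rbar_lt (Finite r) (Lub_Rbar E) -> exists w, E w /\ r < w.
Proof.
  intros Hlt. apply NNPP. intro Hno.
  assert (Hub : is_ub_Rbar E (Finite r)).
  { intros x Hx. simpl. apply Rnot_lt_le. intro Hrx. apply Hno. exists x. split; assumption. }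
  destruct (Lub_Rbar_correct E) as [_ Hl]. specialize (Hl _ Hub).
  apply (Rbar_lt_not_le _ _ Hlt Hl).
Qed.

Lemma lub_to_le (E : R -> Prop) r : (forall lam, lam < r -> E lam) -> Rbar_le (Finite r) (Lub_Rbar E).
Proof.
  intros H. destruct (Lub_Rbar_correct E) as [Hub _].
  destruct (Lub_Rbar E) as [l| |] eqn:El; simpl.
  - apply Rnot_lt_le. intro Hlr. assert (Hm := Hub ((l + r) / 2) (H ((l + r) / 2) ltac:(lra))). simpl in Hm. lra.
  - exact I.
  - exact (Hub (r - 1) (H (r - 1) ltac:(lra))).
Qed.

Lemma part_generic (E : R -> Prop) k n xi : (2 <= k <= n)%nat -> E (-1) ->
  (forall w lam, E w -> 0 < lam -> 0 < (INR k - 1) * w + INR n -> lam * ((INR k - 1) * w + INR n) < w - INR n + INR k -> lambda_set n xi lam) ->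
  Rbar_le (rhs k n (Lub_Rbar E)) (lambda_exp n xi).
Proof.
  intros Hkn HE1 Hkey.
  assert (Hk : 2 <= INR k) by (apply (le_INR 2); lia).
  assert (Hnk : INR k <= INR n) by (apply le_INR; lia).
  assert (Hlow := lub_ub E (-1) HE1).
  unfold lambda_exp.
  destruct (Lub_Rbar E) as [w0| |] eqn:EW; simpl.
  - apply lub_to_le. intros lam Hlam.
    destruct (Rle_lt_dec lam 0) as [Hl0|Hl0]; [apply lam_nonpos; exact Hl0|].
    simpl in Hlow.
    assert (HD : 0 < (INR k - 1) * w0 + INR n) by nra.
    set (G0 := w0 - INR n + INR k - lam * ((INR k - 1) * w0 + INR n)).
    assert (HG0 : 0 < G0).
    { unfold G0. apply Rmult_lt_compat_r with (r := (INR k - 1) * w0 + INR n) in Hlam; [|exact HD].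
      unfold Rdiv in Hlam. rewrite Rmult_assoc, Rinv_l in Hlam by lra. lra. }
    assert (Hs : lam * (INR k - 1) <= 1).
    { apply Rnot_lt_le. intro Hs. unfold G0 in HG0.
      destruct (Rle_lt_dec 0 w0) as [Hw|Hw].
      - assert (lam * (INR k - 1) * w0 >= w0) by nra. nra.
      - assert ((1 - lam * (INR k - 1)) * w0 <= lam * (INR k - 1) - 1) by nra. nra. }
    destruct (get_w E (w0 - G0 / 2)) as [w [Hw Hww]].
    { rewrite EW. simpl. lra. }
    apply (Hkey w lam Hw Hl0).
    { assert (G0 < w0 - INR n + INR k) by (unfold G0; nra). nra. }
    assert (w - INR n + INR k - lam * ((INR k - 1) * w + INR n) = G0 + (1 - lam * (INR k - 1)) * (w - w0)) by (unfold G0; ring).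
    assert (0 <= 1 - lam * (INR k - 1)) by lra.
    assert (1 - lam * (INR k - 1) <= 1) by nra.
    assert ((1 - lam * (INR k - 1)) * (w - w0) > - G0 / 2).
    { destruct (Rle_lt_dec w0 w). - nra. - nra. }
    nra.
  - apply lub_to_le. intros lam Hlam.
    destruct (Rle_lt_dec lam 0) as [Hl0|Hl0]; [apply lam_nonpos; exact Hl0|].
    assert (Hs : 0 < 1 - lam * (INR k - 1)).
    { apply Rmult_lt_compat_r with (r := INR k - 1) in Hlam; [|lra].
      unfold Rdiv in Hlam. rewrite Rmult_1_l, Rinv_l in Hlam by lra. lra. }
    destruct (get_w E ((INR n - INR k + lam * INR n) / (1 - lam * (INR k - 1)))) as [w [Hw Hww]].
    { rewrite EW. simpl. exact I. }
    assert (Hw0 : 0 <= (INR n - INR k + lam * INR n) / (1 - lam * (INR k - 1))).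
    { unfold Rdiv. apply Rmult_le_pos; [nra|left; apply Rinv_0_lt_compat; lra]. }
    apply (Hkey w lam Hw Hl0); [nra|].
    apply Rmult_lt_compat_r with (r := 1 - lam * (INR k - 1)) in Hww; [|exact Hs].
    unfold Rdiv in Hww. rewrite Rmult_assoc, Rinv_l, Rmult_1_r in Hww by lra. nra.
  - simpl in Hlow. contradiction.
Qed.

Lemma INR_abs_nat z : INR (Z.abs_nat z) = Rabs (IZR z).
Proof. rewrite INR_IZR_INZ, Nat2Z.inj_abs_nat, abs_IZR. reflexivity. Qed.

Lemma sum_zero (g : nat -> R) m : (forall i, (i <= m)%nat -> g i = 0) -> sum_f_R0 g m = 0.
Proof. intros H. rewrite (sum_eq _ (fun _ => 0)) by exact H. rewrite sum_cte. ring. Qed.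

Lemma poly_zero (a : nat -> Z) k xi : (forall i, (i <= k)%nat -> a i = 0%Z) -> poly a k xi = 0.
Proof. intros H. apply sum_zero. intros i Hi. rewrite H by exact Hi. ring. Qed.

Lemma transc_nz xi : transcendental xi -> xi <> 0.
Proof.
  intros Ht E. apply (Ht 1%nat (fun i => if Nat.eqb i 1 then 1%Z else 0%Z)).
  - exists 1%nat. split; [lia|]. simpl. discriminate.
  - simpl. rewrite E. ring.
Qed.

Lemma w_set_m1 lead k xi : xi <> 0 -> w_set lead k xi (-1).
Proof.
  intros Hxi X0. set (X := Rmax (Rmax X0 1) (Rabs (xi ^ k))).
  exists X. split; [unfold X; eapply Rle_trans; apply Rmax_l|].
  assert (HX1 : 1 <= X) by (unfold X; eapply Rle_trans; [|apply Rmax_l]; apply Rmax_r).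
  exists (fun j => if Nat.eqb j k then 1%Z else 0%Z).
  assert (Hs : sum_f_R0 (fun j => IZR (if Nat.eqb j k then 1%Z else 0%Z) * xi ^ j) k = xi ^ k).
  { destruct k as [|k'].
    - simpl. ring.
    - rewrite tech5. rewrite sum_zero.
      + rewrite Nat.eqb_refl. ring.
      + intros i Hi. replace (Nat.eqb i (S k')) with false by (symmetry; apply Nat.eqb_neq; lia). ring. }
  rewrite Hs. split; [apply Rabs_pos_lt; apply pow_nonzero; exact Hxi|split].
  - replace (- -1) with 1 by ring. rewrite Rpower_1 by lra. unfold X. apply Rmax_r.
  - split.
    + intros j _. destruct (Nat.eqb j k); simpl; rewrite ?Rabs_R1, ?Rabs_R0; lra.
    + intros _ j Hj. replace (Nat.eqb j k) with false by (symmetry; apply Nat.eqb_neq; lia).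
      rewrite Nat.eqb_refl. rewrite Rabs_R0, Rabs_R1. lra.
Qed.

Lemma part1_key k n xi w lam : (2 <= k <= n)%nat -> w_set true k xi w -> 0 < lam -> 0 < (INR k - 1) * w + INR n ->
  lam * ((INR k - 1) * w + INR n) < w - INR n + INR k -> lambda_set n xi lam.
Proof.
  intros Hkn Hw Hl HD Hcond.
  assert (Hkn1 : (1 <= k <= n)%nat) by lia.
  set (G := INR (k * 1 + 1)).
  assert (HCE : 0 <= G ^ n * rho xi n).
  { apply Rmult_le_pos; [apply pow_le; unfold G; apply pos_INR| pose proof (rho_ge1 xi n); lra]. }
  destruct (engine_approx xi n k 1 1 (G ^ n * rho xi n) w (k - 1) Hkn1 (le_n 1) Rlt_0_1 HCE) as [C [c2 [HC [Hc2 Hea]]]].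
  assert (HkR : INR (k - 1) = INR k - 1) by (rewrite minus_INR by lia; simpl; ring).
  assert (HnkR : INR (n - k) = INR n - INR k) by (rewrite minus_INR by lia; reflexivity).
  apply (final_analysis xi n (k - 1) (n - k + 1) (w - INR (n - k)) lam C c2 0); try assumption; try lia.
  - rewrite HnkR. nra.
  - rewrite HnkR, plus_INR, HkR. replace (INR (k - 1 + 1)) with (INR k) by (f_equal; lia).
    simpl. rewrite HnkR. replace (lam * ((INR n - INR k + 1) * INR k + (w - (INR n - INR k)) * (INR k - 1)))
      with (lam * ((INR k - 1) * w + INR n)) by ring. lra.
  - intros X0. destruct (Hw (Rmax X0 1)) as [X [HX [a [Hp1 [Hp2 [Hp3 Hp4]]]]]].
    assert (HX1 : 1 <= X) by (eapply Rle_trans; [apply Rmax_r|exact HX]).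
    exists X. split; [eapply Rle_trans; [apply Rmax_l|exact HX]|split; [exact HX1|]].
    intros K HK _ HK2.
    specialize (Hp4 eq_refl).
    assert (Hak : a k <> 0%Z).
    { intro E. assert (poly a k xi = 0).
      { apply poly_zero. intros i Hi. destruct (Nat.eq_dec i k) as [->|Hne]; [exact E|].
        assert (Hai := Hp4 i ltac:(lia)). rewrite E, Rabs_R0 in Hai.
        apply eq_IZR. apply Rabs_eq_0. apply Rle_antisym; [exact Hai|apply Rabs_pos]. }
      unfold poly in H. rewrite H, Rabs_R0 in Hp1. lra. }
    set (H := Z.abs_nat (a k)).
    assert (HH : (1 <= H)%nat) by (unfold H; lia).
    assert (HHR : INR H = Rabs (IZR (a k))) by (apply INR_abs_nat).
    eapply (Hea X a H (seq 1 (k - 1)) HX1 HH).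
    + rewrite HHR. apply Hp3. lia.
    + intros i Hi. rewrite Nat.mul_1_l, HHR. destruct (Nat.eq_dec i k) as [->|Hne]; [lra|apply Hp4; lia].
    + intros m Hm. apply in_seq in Hm. lia.
    + rewrite length_seq. lia.
    + apply stab_lead; try lia. * symmetry; exact HHR.
      * intros i Hi. rewrite Nat.mul_1_l, HHR. destruct (Nat.eq_dec i k) as [->|Hne]; [lra|apply Hp4; lia].
    + unfold poly. lra.
    + exact HK.
    + exact HK2.
Qed.

Lemma part1 k n xi : (2 <= k)%nat -> (k <= n)%nat -> transcendental xi ->
  Rbar_le (rhs k n (w_lead_exp k xi)) (lambda_exp n xi).
Proof.
  intros Hk Hkn Ht. unfold w_lead_exp. apply part_generic; [lia| apply w_set_m1; apply transc_nz; exact Ht|].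
  intros w lam Hw Hl HD Hc. apply (part1_key k n xi w lam); auto.
Qed.

Lemma sum_rev (g : nat -> R) N : sum_f_R0 g N = sum_f_R0 (fun i => g (N - i)%nat) N.
Proof.
  revert g. induction N as [|N IH]; intros g; [simpl; reflexivity|].
  rewrite decomp_sum by lia. change (Init.Nat.pred (S N)) with N. rewrite (IH (fun i => g (S i))). rewrite tech5.
  replace (S N - S N)%nat with 0%nat by lia. rewrite Rplus_comm. f_equal.
  apply sum_eq. intros i Hi. f_equal. lia.
Qed.

Lemma poly_rev (a : nat -> Z) k xi : xi <> 0 ->
  poly (fun i => a (k - i)%nat) k (/ xi) = (/ xi) ^ k * poly a k xi.
Proof.
  intros Hxi. unfold poly. rewrite (sum_rev (fun i => IZR (a (k - i)%nat) * (/ xi) ^ i)).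
  rewrite scal_sum. apply sum_eq. intros i Hi. cbv beta.
  replace (k - (k - i))%nat with i by lia.
  replace ((/ xi) ^ k) with ((/ xi) ^ (k - i) * (/ xi) ^ i) by (rewrite <- pow_add; f_equal; lia).
  rewrite <- (Rmult_1_l ((/ xi) ^ (k - i))) at 1.
  replace 1 with ((xi * / xi) ^ i) by (rewrite Rinv_r by exact Hxi; apply pow1).
  rewrite Rpow_mult_distr. ring.
Qed.

Lemma approx_rev xi n : xi <> 0 -> (1 <= n)%nat ->
  exists c, 1 <= c /\ forall e Y, e <= Rabs (/ xi) ^ n / 2 ->
    Approx (/ xi) n e Y -> Approx xi n (c * e) (c * Y).
Proof.
  intros Hxi Hn. set (et := / xi).
  assert (Het : et <> 0) by (unfold et; apply Rinv_neq_0_compat; exact Hxi).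
  exists (Rmax 1 (Rmax (2 * rho et n) (rho xi n + 1))). split; [apply Rmax_l|].
  intros e Y He [x [Hx1 [Hx2 Hx3]]].
  set (c := Rmax 1 (Rmax (2 * rho et n) (rho xi n + 1))).
  assert (Hc1 : 1 <= c) by apply Rmax_l.
  assert (Hc2 : 2 * rho et n <= c) by (eapply Rle_trans; [|apply Rmax_r]; apply Rmax_l).
  assert (Hc3 : rho xi n + 1 <= c) by (eapply Rle_trans; [|apply Rmax_r]; apply Rmax_r).
  assert (Hetn : 0 < Rabs et ^ n) by (apply pow_lt; apply Rabs_pos_lt; exact Het).
  assert (Hx01 : 1 <= Rabs (IZR (x 0%nat))).
  { rewrite <- abs_IZR. apply (IZR_le 1). rewrite <- abs_IZR in Hx1. apply lt_IZR in Hx1. lia. }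
  assert (Hen : Rabs (IZR (x 0%nat) * et ^ n - IZR (x n)) <= e) by (apply Hx3; lia).
  assert (He0 : 0 <= e) by (eapply Rle_trans; [apply Rabs_pos|exact Hen]).
  set (ee := fun j => IZR (x 0%nat) * et ^ j - IZR (x j)).
  assert (Hee : forall j, (j <= n)%nat -> Rabs (ee j) <= e).
  { intros j Hj. destruct (Nat.eq_dec j 0) as [->|Hj0].
    - unfold ee. simpl. replace (IZR (x 0%nat) * 1 - IZR (x 0%nat)) with 0 by ring. rewrite Rabs_R0. exact He0.
    - apply Hx3. lia. }
  exists (fun m => x (n - m)%nat). simpl. replace (n - 0)%nat with n by lia.
  assert (Hxn : IZR (x n) = IZR (x 0%nat) * et ^ n - ee n) by (unfold ee; ring).
  assert (HA : Rabs (IZR (x 0%nat) * et ^ n) = Rabs (IZR (x 0%nat)) * Rabs et ^ n) by (rewrite Rabs_mult, <- RPow_abs; reflexivity).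
  split; [|split].
  - rewrite Hxn. assert (Hn' := Hee n (le_n n)).
    assert (H1 : Rabs (IZR (x 0%nat) * et ^ n) - Rabs (ee n) <= Rabs (IZR (x 0%nat) * et ^ n - ee n)) by apply Rabs_triang_inv.
    rewrite HA in H1. nra.
  - rewrite Hxn. eapply Rle_trans; [apply Rabs_triang|]. rewrite Rabs_Ropp, HA.
    assert (Rabs et ^ n <= rho et n) by (rewrite RPow_abs; apply pow_le_rho; lia).
    assert (Hn' := Hee n (le_n n)).
    assert (HY : 1 <= Y) by lra.
    assert (Rabs (IZR (x 0%nat)) * Rabs et ^ n <= Y * rho et n) by (apply Rmult_le_compat; lra).
    assert (e <= Y * rho et n) by nra.
    assert (2 * rho et n * Y <= c * Y) by (apply Rmult_le_compat_r; lra). nra.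
  - intros m Hm.
    assert (Hid : IZR (x n) * xi ^ m - IZR (x (n - m)%nat) = - (ee n * xi ^ m) + ee (n - m)%nat).
    { assert (Hp : et ^ n * xi ^ m = et ^ (n - m)).
      { replace n with ((n - m) + m)%nat at 1 by lia. rewrite pow_add, Rmult_assoc, <- Rpow_mult_distr.
        replace (et * xi) with 1 by (unfold et; field; exact Hxi). rewrite pow1. ring. }
      unfold ee. rewrite <- Hp. ring. }
    rewrite Hid. eapply Rle_trans; [apply Rabs_triang|]. rewrite Rabs_Ropp, Rabs_mult.
    assert (Rabs (xi ^ m) <= rho xi n) by (apply pow_le_rho; lia).
    assert (H1 := Hee n (le_n n)). assert (H2 := Hee (n - m)%nat ltac:(lia)).
    assert (Rabs (ee n) * Rabs (xi ^ m) <= e * rho xi n) by (apply Rmult_le_compat; try apply Rabs_pos; lra).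
    assert ((rho xi n + 1) * e <= c * e) by (apply Rmult_le_compat_r; lra). nra.
Qed.

Definition ze (a : nat -> Z) (k i : nat) : Z := if Nat.leb i k then a i else 0%Z.

Lemma sum_extract1 (g : nat -> R) M p : (p <= M)%nat ->
  sum_f_R0 g M = g p + sum_f_R0 (fun i => if Nat.eqb i p then 0 else g i) M.
Proof.
  induction M as [|M IH]; intros Hp.
  - assert (p = 0%nat) by lia. subst. simpl. ring.
  - destruct (Nat.eq_dec p (S M)) as [->|Hne].
    + rewrite !tech5. rewrite Nat.eqb_refl.
      rewrite (sum_eq (fun i => if Nat.eqb i (S M) then 0 else g i) g).
      * ring.
      * intros i Hi. replace (Nat.eqb i (S M)) with false by (symmetry; apply Nat.eqb_neq; lia). reflexivity.
    + rewrite !tech5. rewrite IH by lia.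
      replace (Nat.eqb (S M) p) with false by (symmetry; apply Nat.eqb_neq; lia). ring.
Qed.

Lemma sum_ze (a : nat -> Z) k (e : nat -> R) j :
  sum_f_R0 (fun i => IZR (a i) * e (i + j)%nat) k = sum_f_R0 (fun i => IZR (ze a k i) * e (i + j)%nat) (S k).
Proof.
  rewrite tech5. unfold ze. replace (Nat.leb (S k) k) with false by (symmetry; apply Nat.leb_gt; lia).
  rewrite Rmult_0_l, Rplus_0_r. apply sum_eq. intros i Hi.
  replace (Nat.leb i k) with true by (symmetry; apply Nat.leb_le; lia). reflexivity.
Qed.

Lemma stab2 xi k a p (H : nat) c0 : (1 <= p <= k)%nat -> (1 <= H)%nat -> 0 < c0 ->
  (forall i, (i <= k)%nat -> Rabs (IZR (a i)) <= INR H) ->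
  INR H ^ 2 <= c0 * Rabs (IZR (ze a k p * ze a k p - ze a k (p - 1) * ze a k (p + 1))%Z) ->
  Stab xi (k + 1) k a (seq 1 (p - 1) ++ seq (p + 2) (k - p)) H (2 * c0 * (rho xi (k + 1) + INR k + 2) + 1).
Proof.
  intros Hp HH Hc0 Ha HD e s eta He0 Heta Hrel Hfree m Hm.
  set (F := seq 1 (p - 1) ++ seq (p + 2) (k - p)) in *.
  set (d := Rabs (poly a k xi)).
  set (rh := rho xi (k + 1)).
  assert (Hrh : 1 <= rh) by apply rho_ge1.
  assert (HHpos : 1 <= INR H) by (apply (le_INR 1); lia).
  assert (Hd : 0 <= d) by apply Rabs_pos.
  assert (HX : 0 <= Rabs s * d / INR H).
  { unfold Rdiv. apply Rmult_le_pos; [apply Rmult_le_pos; [apply Rabs_pos|lra]|left; apply Rinv_0_lt_compat; lra]. }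
  assert (Hk0 : 0 <= INR k) by apply pos_INR.
  set (C := 2 * c0 * (rh + INR k + 2) + 1).
  assert (HC1 : 1 <= C) by (unfold C; nra).
  assert (HinF : forall m, (1 <= m <= k + 1)%nat -> m <> p -> m <> (p + 1)%nat -> In m F).
  { intros m0 Hm0 H1 H2. unfold F. apply in_or_app.
    destruct (Nat.lt_ge_cases m0 p); [left; apply in_seq; lia| right; apply in_seq; lia]. }
  destruct (classic (In m F)) as [HmF|HmF].
  { eapply Rle_trans; [apply Hfree; exact HmF|]. nra. }
  assert (Hmp : m = p \/ m = (p + 1)%nat).
  { destruct (Nat.eq_dec m p); [left; assumption|]. destruct (Nat.eq_dec m (p + 1)); [right; assumption|].
    exfalso. apply HmF. apply HinF; assumption. }
  assert (Hze : forall i, Rabs (IZR (ze a k i)) <= INR H).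
  { intros i. unfold ze. destruct (Nat.leb_spec i k); [apply Ha; lia|rewrite Rabs_R0; lra]. }
  assert (Hterm : forall i j, (i <= S k)%nat -> (j <= 1)%nat -> (i + j)%nat <> p -> (i + j)%nat <> (p + 1)%nat ->
     Rabs (IZR (ze a k i) * e (i + j)%nat) <= INR H * eta).
  { intros i j Hi Hj H1 H2. rewrite Rabs_mult. unfold ze at 1. destruct (Nat.leb_spec i k).
    - apply Rmult_le_compat; [apply Rabs_pos|apply Rabs_pos|apply Ha; lia|].
      destruct (Nat.eq_dec (i + j) 0) as [E|E].
      + rewrite E, He0, Rabs_R0. lra.
      + apply Hfree. apply HinF; lia.
    - rewrite Rabs_R0. nra. }
  set (al := IZR (ze a k p)). set (be := IZR (ze a k (p + 1))). set (ga := IZR (ze a k (p - 1))).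
  assert (R0 := Hrel 0%nat ltac:(lia)). rewrite sum_ze in R0.
  rewrite (sum_extract1 _ (S k) p) in R0 by lia.
  rewrite (sum_extract1 _ (S k) (p + 1)) in R0 by lia.
  set (rest0 := sum_f_R0 _ (S k)) in R0.
  assert (Hrest0 : Rabs rest0 <= INR (S (S k)) * (INR H * eta)).
  { unfold rest0. eapply Rle_trans; [apply sum_abs_le|]. rewrite Rmult_comm. apply sum_le_const.
    intros i Hi. destruct (Nat.eqb_spec i (p + 1)); [rewrite Rabs_R0; nra|].
    destruct (Nat.eqb_spec i p); [rewrite Rabs_R0; nra|]. apply Hterm; lia. }
  assert (R1 := Hrel 1%nat ltac:(lia)). rewrite sum_ze in R1.
  rewrite (sum_extract1 _ (S k) (p - 1)) in R1 by lia.
  rewrite (sum_extract1 _ (S k) p) in R1 by lia.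
  set (rest1 := sum_f_R0 _ (S k)) in R1.
  assert (Hrest1 : Rabs rest1 <= INR (S (S k)) * (INR H * eta)).
  { unfold rest1. eapply Rle_trans; [apply sum_abs_le|]. rewrite Rmult_comm. apply sum_le_const.
    intros i Hi. destruct (Nat.eqb_spec i p); [rewrite Rabs_R0; nra|].
    destruct (Nat.eqb_spec i (p - 1)); [rewrite Rabs_R0; nra|]. apply Hterm; lia. }
  replace (p - 1 + 1)%nat with p in R1 by lia.
  replace (p + 1 + 0)%nat with (p + 1)%nat in R0 by lia.
  replace (p + 0)%nat with p in R0 by lia.
  replace (Nat.eqb p (p - 1)) with false in R1 by (symmetry; apply Nat.eqb_neq; lia).
  replace (Nat.eqb (p + 1) p) with false in R0 by (symmetry; apply Nat.eqb_neq; lia).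
  replace (p + 1)%nat with (S p) in R1 by lia.
  fold al be ga in R0. fold al be ga in R1.
  replace (S p) with (p + 1)%nat in R1 by lia.
  set (Q0 := - (s * xi ^ 0 * poly a k xi) - rest0).
  set (Q1 := - (s * xi ^ 1 * poly a k xi) - rest1).
  assert (E0 : al * e p + be * e (p + 1)%nat = Q0) by (unfold Q0; lra).
  assert (E1 : ga * e p + al * e (p + 1)%nat = Q1) by (unfold Q1; lra).
  set (Qm := Rabs s * rh * d + INR (S (S k)) * (INR H * eta)).
  assert (HQ : forall j, (j <= 1)%nat -> Rabs (- (s * xi ^ j * poly a k xi)) <= Rabs s * rh * d).
  { intros j Hj. rewrite Rabs_Ropp, !Rabs_mult. fold d. apply Rmult_le_compat_r; [lra|].
    apply Rmult_le_compat_l; [apply Rabs_pos|]. apply pow_le_rho. lia. }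
  assert (HQ0 : Rabs Q0 <= Qm).
  { unfold Q0, Qm. eapply Rle_trans; [apply Rabs_triang|].
    assert (Rabs (- rest0) = Rabs rest0) by apply Rabs_Ropp.
    assert (HQj := HQ 0%nat ltac:(lia)). lra. }
  assert (HQ1 : Rabs Q1 <= Qm).
  { unfold Q1, Qm. eapply Rle_trans; [apply Rabs_triang|].
    assert (Rabs (- rest1) = Rabs rest1) by apply Rabs_Ropp.
    assert (HQj := HQ 1%nat ltac:(lia)). lra. }
  set (D := IZR (ze a k p * ze a k p - ze a k (p - 1) * ze a k (p + 1))%Z) in HD.
  assert (HDe : D = al * al - ga * be) by (unfold D, al, ga, be; rewrite minus_IZR, !mult_IZR; ring).
  assert (Hal := Hze p). assert (Hbe := Hze (p + 1)%nat). assert (Hga := Hze (p - 1)%nat).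
  fold al in Hal. fold be in Hbe. fold ga in Hga.
  assert (Hbound : forall y u v w1 w2, D * y = u * w1 - v * w2 -> Rabs u <= INR H -> Rabs v <= INR H ->
      Rabs w1 <= Qm -> Rabs w2 <= Qm -> Rabs y <= C * (eta + Rabs s * d / INR H)).
  { intros y u v w1 w2 Ey Hu Hv Hw1 Hw2.
    assert (HQm : 0 <= Qm) by (eapply Rle_trans; [apply Rabs_pos|exact Hw1]).
    assert (HDy : Rabs D * Rabs y <= 2 * INR H * Qm).
    { rewrite <- Rabs_mult, Ey. eapply Rle_trans; [apply Rabs_triang|]. rewrite Rabs_Ropp, !Rabs_mult.
      assert (Rabs u * Rabs w1 <= INR H * Qm) by (apply Rmult_le_compat; try apply Rabs_pos; lra).
      assert (Rabs v * Rabs w2 <= INR H * Qm) by (apply Rmult_le_compat; try apply Rabs_pos; lra). lra. }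
    assert (HH2 : INR H * INR H * Rabs y <= c0 * (2 * INR H * Qm)).
    { apply Rle_trans with (c0 * Rabs D * Rabs y).
      - apply Rmult_le_compat_r; [apply Rabs_pos|]. simpl in HD. lra.
      - rewrite Rmult_assoc. apply Rmult_le_compat_l; lra. }
    assert (Hy : INR H * Rabs y <= 2 * c0 * Qm).
    { apply Rmult_le_reg_l with (INR H); [lra|]. nra. }
    assert (HQm2 : Qm <= INR H * ((rh + INR k + 2) * (eta + Rabs s * d / INR H))).
    { unfold Qm. rewrite S_INR, S_INR.
      replace (INR H * ((rh + INR k + 2) * (eta + Rabs s * d / INR H)))
        with (INR H * (rh + INR k + 2) * eta + (rh + INR k + 2) * (Rabs s * d)) by (field; lra).
      assert (0 <= Rabs s * d) by (apply Rmult_le_pos; [apply Rabs_pos|lra]).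
      assert (0 <= INR H * eta) by nra. nra. }
    apply Rmult_le_reg_l with (INR H); [lra|].
    apply Rle_trans with (2 * c0 * Qm); [exact Hy|].
    unfold C. assert (0 <= eta + Rabs s * d / INR H) by lra.
    assert (0 <= INR H * (eta + Rabs s * d / INR H)) by nra. nra. }
  destruct Hmp as [->| ->].
  - apply (Hbound (e p) al be Q0 Q1); try assumption. rewrite HDe. rewrite <- E0, <- E1. ring.
  - apply (Hbound (e (p + 1)%nat) al ga Q1 Q0); try assumption. rewrite HDe. rewrite <- E0, <- E1. ring.
Qed.

Lemma argmax (g : nat -> R) k : exists p, (p <= k)%nat /\ forall i, (i <= k)%nat -> g i <= g p.
Proof.
  induction k as [|k [p [Hp IH]]].
  - exists 0%nat. split; [lia|]. intros i Hi. replace i with 0%nat by lia. lra.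
  - destruct (Rle_lt_dec (g (S k)) (g p)).
    + exists p. split; [lia|]. intros i Hi. destruct (Nat.eq_dec i (S k)) as [->|]; [lra|apply IH; lia].
    + exists (S k). split; [lia|]. intros i Hi. destruct (Nat.eq_dec i (S k)) as [->|]; [lra|].
      assert (g i <= g p) by (apply IH; lia). lra.
Qed.

Lemma key_branches k n xi w lam : (2 <= k <= n)%nat -> w_set false k xi w -> 0 < lam ->
  0 < (INR k - 1) * w + INR n -> lam * ((INR k - 1) * w + INR n) < w - INR n + INR k ->
  (exists C c2 K1 Xt, 1 <= C /\ 0 < c2 /\ forall X a, Xt <= X -> 1 <= X ->
     0 < Rabs (poly a k xi) -> Rabs (poly a k xi) <= Rpower X (- w) ->
     (forall j, (j <= k)%nat -> Rabs (IZR (a j)) <= X) ->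
     forall K : nat, (1 <= K)%nat -> K1 <= INR K -> c2 * INR K ^ (k - 1 + 1) <= Rpower X (w - INR (n - k)) ->
     Approx xi n (C / INR K) (C * INR K ^ (k - 1) * X ^ (n - k + 1))) ->
  lambda_set n xi lam.
Proof.
  intros Hkn Hw Hl HD Hcond [C [c2 [K1 [Xt [HC [Hc2 Hbr]]]]]].
  assert (HkR : INR (k - 1) = INR k - 1) by (rewrite minus_INR by lia; simpl; ring).
  assert (HnkR : INR (n - k) = INR n - INR k) by (rewrite minus_INR by lia; reflexivity).
  apply (final_analysis xi n (k - 1) (n - k + 1) (w - INR (n - k)) lam C c2 K1); try assumption; try lia.
  - rewrite HnkR. nra.
  - rewrite HnkR, plus_INR, HkR. replace (INR (k - 1 + 1)) with (INR k) by (f_equal; lia).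
    simpl. rewrite HnkR. replace (lam * ((INR n - INR k + 1) * INR k + (w - (INR n - INR k)) * (INR k - 1)))
      with (lam * ((INR k - 1) * w + INR n)) by ring. lra.
  - intros X0. destruct (Hw (Rmax (Rmax X0 1) Xt)) as [X [HX [a [Hp1 [Hp2 [Hp3 _]]]]]].
    assert (HX1 : 1 <= X) by (eapply Rle_trans; [|exact HX]; eapply Rle_trans; [|apply Rmax_l]; apply Rmax_r).
    assert (HX0 : X0 <= X) by (eapply Rle_trans; [|exact HX]; eapply Rle_trans; [|apply Rmax_l]; apply Rmax_l).
    assert (HXt : Xt <= X) by (eapply Rle_trans; [|exact HX]; apply Rmax_r).
    exists X. split; [exact HX0|split; [exact HX1|]].
    intros K HK HK1 HK2. apply (Hbr X a HXt HX1 Hp1 Hp2 Hp3 K HK HK1 HK2).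
Qed.

Lemma not_all_zero (a : nat -> Z) k xi : 0 < Rabs (poly a k xi) -> exists i, (i <= k)%nat /\ a i <> 0%Z.
Proof.
  intros Hp. apply NNPP. intro Hno. assert (poly a k xi = 0).
  { apply poly_zero. intros i Hi. apply NNPP. intro Hne. apply Hno. exists i. split; assumption. }
  rewrite H, Rabs_R0 in Hp. lra.
Qed.

Lemma Rabs_IZR_ge1 z : z <> 0%Z -> 1 <= Rabs (IZR z).
Proof. intros Hz. rewrite <- abs_IZR. apply (IZR_le 1). lia. Qed.

Lemma mono_c2 c2 c2' K g X : c2 <= c2' -> 0 <= K -> c2' * K <= Rpower X g -> c2 * K <= Rpower X g.
Proof. intros; nra. Qed.

Definition w2 (i : nat) : R := 2 ^ (i * i).

Lemma w2_pos i : 0 < w2 i.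
Proof. unfold w2. apply pow_lt. lra. Qed.

Lemma w2_ge1 i : 1 <= w2 i.
Proof. unfold w2. apply pow_R1_Rle. lra. Qed.

Lemma w2_mono i j : (i <= j)%nat -> w2 i <= w2 j.
Proof. intros. unfold w2. apply Rle_pow; [lra|nia]. Qed.

Lemma w2_id p : (1 <= p)%nat -> w2 (p - 1) * w2 (p + 1) = 4 * (w2 p * w2 p).
Proof.
  intros Hp. unfold w2. rewrite <- !pow_add.
  replace ((p - 1) * (p - 1) + (p + 1) * (p + 1))%nat with (2 + (p * p + p * p))%nat by nia.
  rewrite pow_add. simpl. ring.
Qed.

Lemma ze_in a k i : (i <= k)%nat -> ze a k i = a i.
Proof. intros. unfold ze. replace (Nat.leb i k) with true by (symmetry; apply Nat.leb_le; lia). reflexivity. Qed.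
Lemma ze_out a k i : (k < i)%nat -> ze a k i = 0%Z.
Proof. intros. unfold ze. replace (Nat.leb i k) with false by (symmetry; apply Nat.leb_gt; lia). reflexivity. Qed.

Lemma prod_neighbors (a : nat -> Z) k p :
  (forall i, (i <= k)%nat -> Rabs (IZR (a i)) * w2 i <= Rabs (IZR (a p)) * w2 p) -> (1 <= p <= k)%nat ->
  Rabs (IZR (ze a k (p - 1)) * IZR (ze a k (p + 1))) <= Rabs (IZR (a p)) * Rabs (IZR (a p)) / 4.
Proof.
  intros HP Hp. assert (0 <= Rabs (IZR (a p))) by apply Rabs_pos.
  destruct (Nat.le_gt_cases (p + 1) k) as [Hk|Hk].
  - rewrite !ze_in by lia. rewrite Rabs_mult.
    set (x := Rabs (IZR (a (p - 1)%nat))). set (y := Rabs (IZR (a (p + 1)%nat))). set (z := Rabs (IZR (a p))).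
    assert (Hx := HP (p - 1)%nat ltac:(lia)). assert (Hy := HP (p + 1)%nat ltac:(lia)).
    fold x y z in Hx, Hy.
    assert (0 <= x) by apply Rabs_pos. assert (0 <= y) by apply Rabs_pos.
    assert (W1 := w2_pos (p - 1)). assert (W2 := w2_pos (p + 1)). assert (W := w2_pos p).
    assert (Hid := w2_id p ltac:(lia)).
    assert (Hxy : x * w2 (p - 1) * (y * w2 (p + 1)) <= z * w2 p * (z * w2 p)).
    { apply Rmult_le_compat; try assumption; apply Rmult_le_pos; lra. }
    replace (x * w2 (p - 1) * (y * w2 (p + 1))) with (x * y * (w2 (p - 1) * w2 (p + 1))) in Hxy by ring.
    rewrite Hid in Hxy.
    apply Rmult_le_reg_r with (4 * (w2 p * w2 p)); [nra|].
    replace (z * z / 4 * (4 * (w2 p * w2 p))) with (z * w2 p * (z * w2 p)) by (field).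
    lra.
  - rewrite (ze_out a k (p + 1)) by lia. rewrite Rmult_0_r, Rabs_R0.
    assert (0 <= Rabs (IZR (a p)) * Rabs (IZR (a p))) by nra. lra.
Qed.

Lemma D_lower (a : nat -> Z) k p (H : nat) :
  (forall i, (i <= k)%nat -> Rabs (IZR (a i)) * w2 i <= Rabs (IZR (a p)) * w2 p) -> (1 <= p <= k)%nat ->
  INR H <= Rabs (IZR (a p)) * w2 p ->
  INR H ^ 2 <= 2 * (w2 k * w2 k) * Rabs (IZR (ze a k p * ze a k p - ze a k (p - 1) * ze a k (p + 1))%Z).
Proof.
  intros HP Hp HH.
  assert (Hn := prod_neighbors a k p HP Hp).
  rewrite minus_IZR, !mult_IZR. rewrite (ze_in a k p) by lia.
  set (z := Rabs (IZR (a p))) in *.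
  assert (Hz : IZR (a p) * IZR (a p) = z * z) by (unfold z; rewrite <- Rabs_mult; rewrite Rabs_right; [reflexivity|]; apply Rle_ge; nra).
  assert (Htr : z * z - Rabs (IZR (ze a k (p - 1)) * IZR (ze a k (p + 1))) <= Rabs (IZR (a p) * IZR (a p) - IZR (ze a k (p - 1)) * IZR (ze a k (p + 1)))).
  { rewrite <- Hz. rewrite <- (Rabs_right (IZR (a p) * IZR (a p))) at 1 by (rewrite Hz; apply Rle_ge; nra). apply Rabs_triang_inv. }
  assert (Hwk : w2 p <= w2 k) by (apply w2_mono; lia).
  assert (0 <= z) by apply Rabs_pos. assert (Hwp := w2_pos p).
  assert (Hh : 0 <= INR H) by apply pos_INR.
  assert (INR H <= z * w2 k) by nra.
  assert (INR H ^ 2 <= (z * w2 k) * (z * w2 k)) by (simpl; rewrite Rmult_1_r; apply Rmult_le_compat; lra).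
  assert (3 / 4 * (z * z) <= Rabs (IZR (a p) * IZR (a p) - IZR (ze a k (p - 1)) * IZR (ze a k (p + 1)))) by lra.
  assert (0 <= w2 k * w2 k) by (assert (W := w2_pos k); nra).
  nra.
Qed.

Lemma K1_bound C2 e K : 0 < e -> 0 < INR K -> 2 * C2 / e <= INR K -> C2 / INR K <= e / 2.
Proof.
  intros He HK H. unfold Rdiv in *. apply Rmult_le_reg_r with (INR K * 2 / e).
  { unfold Rdiv. apply Rmult_lt_0_compat; [lra|apply Rinv_0_lt_compat; lra]. }
  replace (C2 * / INR K * (INR K * 2 / e)) with (2 * C2 * / e) by (field; lra).
  replace (e * / 2 * (INR K * 2 / e)) with (INR K) by (field; lra). exact H.
Qed.

Lemma br_nk1 k xi w : (2 <= k)%nat -> xi <> 0 ->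
  exists C c2 K1 Xt, 1 <= C /\ 0 < c2 /\ forall X a, Xt <= X -> 1 <= X ->
     0 < Rabs (poly a k xi) -> Rabs (poly a k xi) <= Rpower X (- w) ->
     (forall j, (j <= k)%nat -> Rabs (IZR (a j)) <= X) ->
     forall K : nat, (1 <= K)%nat -> K1 <= INR K -> c2 * INR K ^ (k - 1 + 1) <= Rpower X (w - INR (k + 1 - k)) ->
     Approx xi (k + 1) (C / INR K) (C * INR K ^ (k - 1) * X ^ (k + 1 - k + 1)).
Proof.
  intros Hk Hxi.
  set (c0 := 2 * (w2 k * w2 k)).
  assert (Hc0 : 1 <= c0) by (unfold c0; assert (W := w2_ge1 k); nra).
  set (et := / xi).
  assert (Het : et <> 0) by (unfold et; apply Rinv_neq_0_compat; exact Hxi).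
  assert (Hkn : (1 <= k <= k + 1)%nat) by lia.
  set (CE1 := 2 * c0 * (rho xi (k + 1) + INR k + 2) + 1).
  set (CE2 := 2 * c0 * (rho et (k + 1) + INR k + 2) + 1).
  assert (Hk0 : 0 <= INR k) by apply pos_INR.
  assert (HCE1 : 0 <= CE1) by (unfold CE1; assert (R := rho_ge1 xi (k + 1)); nra).
  assert (HCE2 : 0 <= CE2) by (unfold CE2; assert (R := rho_ge1 et (k + 1)); nra).
  assert (Hetk : 0 < Rabs et ^ k) by (apply pow_lt; apply Rabs_pos_lt; exact Het).
  destruct (engine_approx xi (k + 1) k 1 1 CE1 w (k - 1) Hkn (le_n 1) Rlt_0_1 HCE1) as [C1 [c21 [HC1 [Hc21 Hea1]]]].
  destruct (engine_approx et (k + 1) k 1 (Rabs et ^ k) CE2 w (k - 1) Hkn (le_n 1) Hetk HCE2) as [C2 [c22 [HC2 [Hc22 Hea2]]]].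
  destruct (approx_rev xi (k + 1) Hxi ltac:(lia)) as [c [Hc Hrev]].
  fold et in Hrev.
  exists (Rmax C1 (c * C2)), (Rmax c21 c22), (2 * C2 / (Rabs et ^ (k + 1))), 0.
  split; [eapply Rle_trans; [exact HC1|apply Rmax_l]|].
  split; [eapply Rlt_le_trans; [exact Hc21|apply Rmax_l]|].
  intros X a _ HX1 Hp1 Hp2 Hp3 K HK HK1 HK2.
  assert (HKpos : 1 <= INR K) by (apply (le_INR 1); lia).
  assert (HKk : 0 <= INR K ^ (k - 1 + 1)) by (apply pow_le; lra).
  destruct (argmax (fun i => Rabs (IZR (a i))) k) as [i0 [Hi0 HI0]].
  destruct (argmax (fun i => Rabs (IZR (a i)) * w2 i) k) as [p [Hpk HP]].
  simpl in HI0, HP.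
  destruct (not_all_zero a k xi Hp1) as [i1 [Hi1 Hai1]].
  assert (Hai0 : a i0 <> 0%Z).
  { intro E. assert (H1 := HI0 i1 Hi1). rewrite E, Rabs_R0 in H1.
    assert (H2 := Rabs_IZR_ge1 _ Hai1). lra. }
  set (H := Z.abs_nat (a i0)).
  assert (HHR : INR H = Rabs (IZR (a i0))) by apply INR_abs_nat.
  assert (HH : (1 <= H)%nat) by (unfold H; lia).
  assert (Hall : forall i, (i <= k)%nat -> Rabs (IZR (a i)) <= INR H) by (intros i Hi; rewrite HHR; apply HI0; exact Hi).
  assert (Hall1 : forall i, (i <= k)%nat -> Rabs (IZR (a i)) <= INR (1 * H)) by (intros i Hi; rewrite Nat.mul_1_l; apply Hall; exact Hi).
  assert (HHX : INR H <= X) by (rewrite HHR; apply Hp3; exact Hi0).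
  assert (HpH : INR H <= Rabs (IZR (a p)) * w2 p).
  { rewrite HHR. apply Rle_trans with (Rabs (IZR (a i0)) * w2 i0); [|apply HP; exact Hi0].
    assert (W := w2_ge1 i0). assert (0 <= Rabs (IZR (a i0))) by apply Rabs_pos. nra. }
  destruct (Nat.eq_dec p 0) as [Hp0|Hp0].
  -
    subst p. unfold w2 in HpH. simpl in HpH. rewrite Rmult_1_r in HpH.
    set (ra := fun i => a (k - i)%nat).
    assert (Hall' : forall i, (i <= k)%nat -> Rabs (IZR (ra i)) <= INR H) by (intros i Hi; unfold ra; apply Hall; lia).
    assert (Hall1' : forall i, (i <= k)%nat -> Rabs (IZR (ra i)) <= INR (1 * H)) by (intros i Hi; rewrite Nat.mul_1_l; apply Hall'; exact Hi).
    assert (HD' : INR H ^ 2 <= c0 * Rabs (IZR (ze ra k k * ze ra k k - ze ra k (k - 1) * ze ra k (k + 1))%Z)).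
    { rewrite (ze_out ra k (k + 1)) by lia. rewrite (ze_in ra k k) by lia.
      unfold ra. replace (k - k)%nat with 0%nat by lia.
      replace (a 0%nat * a 0%nat - ze (fun i => a (k - i)%nat) k (k - 1) * 0)%Z with (a 0%nat * a 0%nat)%Z by ring.
      rewrite mult_IZR, Rabs_mult. simpl. rewrite Rmult_1_r.
      assert (0 <= INR H) by apply pos_INR.
      assert (INR H * INR H <= Rabs (IZR (a 0%nat)) * Rabs (IZR (a 0%nat))) by (apply Rmult_le_compat; lra).
      assert (0 <= Rabs (IZR (a 0%nat)) * Rabs (IZR (a 0%nat))) by (apply Rmult_le_pos; apply Rabs_pos). nra. }
    assert (HS := stab2 et k ra k H c0 ltac:(lia) HH ltac:(lra) Hall' HD').
    assert (Hpr : Rabs (poly ra k et) <= Rabs et ^ k * Rpower X (- w)).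
    { unfold ra, et. rewrite poly_rev by exact Hxi. rewrite Rabs_mult, <- RPow_abs.
      apply Rmult_le_compat_l; [apply pow_le; apply Rabs_pos|exact Hp2]. }
    assert (HA := Hea2 X ra H (seq 1 (k - 1) ++ seq (k + 2) (k - k)) HX1 HH HHX Hall1').
    assert (HFm : forall m, In m (seq 1 (k - 1) ++ seq (k + 2) (k - k)) -> (1 <= m <= k + 1)%nat).
    { intros m Hm. apply in_app_or in Hm. destruct Hm as [Hm|Hm]; apply in_seq in Hm; lia. }
    assert (HFl : (length (seq 1 (k - 1) ++ seq (k + 2) (k - k)) <= k - 1)%nat) by (rewrite length_app, !length_seq; lia).
    specialize (HA HFm HFl HS Hpr K HK).
    assert (HK2' : c22 * INR K ^ (k - 1 + 1) <= Rpower X (w - INR (k + 1 - k))).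
    { apply (mono_c2 c22 (Rmax c21 c22)); [apply Rmax_r|exact HKk|exact HK2]. }
    specialize (HA HK2').
    assert (Hsmall : C2 / INR K <= Rabs (/ xi) ^ (k + 1) / 2).
    { apply K1_bound; [apply pow_lt; apply Rabs_pos_lt; exact Het|lra|exact HK1]. }
    assert (HR := Hrev _ _ Hsmall HA).
    eapply Approx_mono; [| |exact HR].
    + unfold Rdiv. rewrite <- Rmult_assoc. apply Rmult_le_compat_r; [left; apply Rinv_0_lt_compat; lra|apply Rmax_r].
    + rewrite <- !Rmult_assoc. apply Rmult_le_compat_r; [apply pow_le; lra|].
      apply Rmult_le_compat_r; [apply pow_le; lra|apply Rmax_r].
  - assert (Hp : (1 <= p <= k)%nat) by lia.
    assert (HD := D_lower a k p H HP Hp HpH). fold c0 in HD.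
    assert (HS := stab2 xi k a p H c0 Hp HH ltac:(lra) Hall HD).
    assert (HFm : forall m, In m (seq 1 (p - 1) ++ seq (p + 2) (k - p)) -> (1 <= m <= k + 1)%nat).
    { intros m Hm. apply in_app_or in Hm. destruct Hm as [Hm|Hm]; apply in_seq in Hm; lia. }
    assert (HFl : (length (seq 1 (p - 1) ++ seq (p + 2) (k - p)) <= k - 1)%nat) by (rewrite length_app, !length_seq; lia).
    assert (HK2' : c21 * INR K ^ (k - 1 + 1) <= Rpower X (w - INR (k + 1 - k))).
    { apply (mono_c2 c21 (Rmax c21 c22)); [apply Rmax_l|exact HKk|exact HK2]. }
    assert (Hp2' : Rabs (poly a k xi) <= 1 * Rpower X (- w)) by lra.
    assert (HA := Hea1 X a H _ HX1 HH HHX Hall1 HFm HFl HS Hp2' K HK HK2').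
    eapply Approx_mono; [| |exact HA].
    + unfold Rdiv. apply Rmult_le_compat_r; [left; apply Rinv_0_lt_compat; lra|apply Rmax_l].
    + apply Rmult_le_compat_r; [apply pow_le; lra|].
      apply Rmult_le_compat_r; [apply pow_le; lra|apply Rmax_l].
Qed.

Lemma br_k2 n xi w : (2 <= n)%nat -> xi <> 0 -> 0 < w ->
  exists C c2 K1 Xt, 1 <= C /\ 0 < c2 /\ forall X a, Xt <= X -> 1 <= X ->
     0 < Rabs (poly a 2 xi) -> Rabs (poly a 2 xi) <= Rpower X (- w) ->
     (forall j, (j <= 2)%nat -> Rabs (IZR (a j)) <= X) ->
     forall K : nat, (1 <= K)%nat -> K1 <= INR K -> c2 * INR K ^ (2 - 1 + 1) <= Rpower X (w - INR (n - 2)) ->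
     Approx xi n (C / INR K) (C * INR K ^ (2 - 1) * X ^ (n - 2 + 1)).
Proof.
  intros Hn Hxi Hw.
  assert (Hax : 0 < Rabs xi) by (apply Rabs_pos_lt; exact Hxi).
  set (B := (Z.to_nat (up (2 * (xi * xi + 1) / Rabs xi)) + 1)%nat).
  assert (HB1 : (1 <= B)%nat) by (unfold B; lia).
  assert (HBr : 2 * (xi * xi + 1) / Rabs xi <= INR B).
  { unfold B. rewrite plus_INR. destruct (archimed (2 * (xi * xi + 1) / Rabs xi)) as [A1 A2].
    assert (Hpos : 0 < 2 * (xi * xi + 1) / Rabs xi) by (unfold Rdiv; apply Rmult_lt_0_compat; [nra|apply Rinv_0_lt_compat; lra]).
    rewrite INR_IZR_INZ, Z2Nat.id by (apply le_IZR; lra). simpl. lra. }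
  assert (HBR1 : 1 <= INR B) by (apply (le_INR 1); lia).
  set (et := / xi).
  assert (Het : et <> 0) by (unfold et; apply Rinv_neq_0_compat; exact Hxi).
  assert (Hkn : (1 <= 2 <= n)%nat) by lia.
  set (CE1 := INR (2 * B + 1) ^ n * rho xi n).
  set (CE2 := INR (2 * B + 1) ^ n * rho et n).
  assert (HCE1 : 0 <= CE1) by (unfold CE1; apply Rmult_le_pos; [apply pow_le; apply pos_INR|assert (R := rho_ge1 xi n); lra]).
  assert (HCE2 : 0 <= CE2) by (unfold CE2; apply Rmult_le_pos; [apply pow_le; apply pos_INR|assert (R := rho_ge1 et n); lra]).
  assert (Het2 : 0 < Rabs et ^ 2) by (apply pow_lt; apply Rabs_pos_lt; exact Het).
  destruct (engine_approx xi n 2 B 1 CE1 w (2 - 1) Hkn HB1 Rlt_0_1 HCE1) as [C1 [c21 [HC1 [Hc21 Hea1]]]].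
  destruct (engine_approx et n 2 B (Rabs et ^ 2) CE2 w (2 - 1) Hkn HB1 Het2 HCE2) as [C2 [c22 [HC2 [Hc22 Hea2]]]].
  destruct (approx_rev xi n Hxi ltac:(lia)) as [c [Hc Hrev]].
  fold et in Hrev.
  exists (Rmax C1 (c * C2)), (Rmax c21 c22), (2 * C2 / (Rabs et ^ n)), (Rpower (Rmax (4 / Rabs xi) 1) (/ w)).
  split; [eapply Rle_trans; [exact HC1|apply Rmax_l]|].
  split; [eapply Rlt_le_trans; [exact Hc21|apply Rmax_l]|].
  intros X a HXt HX1 Hp1 Hp2 Hp3 K HK HK1 HK2.
  assert (HKpos : 1 <= INR K) by (apply (le_INR 1); lia).
  assert (HKk : 0 <= INR K ^ (2 - 1 + 1)) by (apply pow_le; lra).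
  set (x0 := Rabs (IZR (a 0%nat))). set (x1 := Rabs (IZR (a 1%nat))). set (x2 := Rabs (IZR (a 2%nat))).
  assert (P0 : 0 <= x0) by apply Rabs_pos. assert (P1 : 0 <= x1) by apply Rabs_pos. assert (P2 : 0 <= x2) by apply Rabs_pos.
  assert (Hnz : 1 <= x0 \/ 1 <= x1 \/ 1 <= x2).
  { destruct (not_all_zero a 2 xi Hp1) as [i [Hi Hai]]. assert (Hge := Rabs_IZR_ge1 _ Hai).
    destruct i as [|[|[|i]]]; [left|right;left|right;right|lia]; assumption. }
  destruct (classic (x1 <= INR B * x2 /\ x0 <= INR B * x2)) as [[S1 S1']|NS1].
  -
    assert (Ha2 : a 2%nat <> 0%Z).
    { intro E. assert (E2 : x2 = 0) by (unfold x2; rewrite E; apply Rabs_R0). rewrite E2, Rmult_0_r in S1, S1'. lra. }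
    set (H := Z.abs_nat (a 2%nat)).
    assert (HHR : INR H = x2) by apply INR_abs_nat.
    assert (HH : (1 <= H)%nat) by (unfold H; lia).
    assert (HaB : forall i, (i <= 2)%nat -> Rabs (IZR (a i)) <= INR (B * H)).
    { intros i Hi. rewrite mult_INR, HHR. destruct i as [|[|[|i]]]; [exact S1'|exact S1| |lia]. fold x2.
      replace x2 with (1 * x2) at 1 by ring. apply Rmult_le_compat_r; lra. }
    assert (HS := stab_lead xi n 2 a H B Hkn HH HB1 (eq_sym HHR) HaB).
    assert (HFm : forall m, In m (seq 1 (2 - 1)) -> (1 <= m <= n)%nat) by (intros m Hm; apply in_seq in Hm; lia).
    assert (HFl : (length (seq 1 (2 - 1)) <= 2 - 1)%nat) by (rewrite length_seq; lia).
    assert (HK2' : c21 * INR K ^ (2 - 1 + 1) <= Rpower X (w - INR (n - 2))).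
    { apply (mono_c2 c21 (Rmax c21 c22)); [apply Rmax_l|exact HKk|exact HK2]. }
    assert (Hp2' : Rabs (poly a 2 xi) <= 1 * Rpower X (- w)) by lra.
    assert (HHX : INR H <= X) by (rewrite HHR; apply Hp3; lia).
    assert (HA := Hea1 X a H _ HX1 HH HHX HaB HFm HFl HS Hp2' K HK HK2').
    eapply Approx_mono; [| |exact HA].
    + unfold Rdiv. apply Rmult_le_compat_r; [left; apply Rinv_0_lt_compat; lra|apply Rmax_l].
    + apply Rmult_le_compat_r; [apply pow_le; lra|].
      apply Rmult_le_compat_r; [apply pow_le; lra|apply Rmax_l].
  - destruct (classic (x1 <= INR B * x0 /\ x2 <= INR B * x0)) as [[S2 S2']|NS2].
    +
      assert (Ha0 : a 0%nat <> 0%Z).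
      { intro E. assert (E0 : x0 = 0) by (unfold x0; rewrite E; apply Rabs_R0). rewrite E0, Rmult_0_r in S2, S2'. lra. }
      set (H := Z.abs_nat (a 0%nat)).
      assert (HHR : INR H = x0) by apply INR_abs_nat.
      assert (HH : (1 <= H)%nat) by (unfold H; lia).
      set (ra := fun i => a (2 - i)%nat).
      assert (HaB : forall i, (i <= 2)%nat -> Rabs (IZR (ra i)) <= INR (B * H)).
      { intros i Hi. rewrite mult_INR, HHR. unfold ra. destruct i as [|[|[|i]]]; [exact S2'|exact S2| |lia]. simpl. fold x0.
        replace x0 with (1 * x0) at 1 by ring. apply Rmult_le_compat_r; lra. }
      assert (HS := stab_lead et n 2 ra H B Hkn HH HB1 (eq_sym HHR) HaB).
      assert (HFm : forall m, In m (seq 1 (2 - 1)) -> (1 <= m <= n)%nat) by (intros m Hm; apply in_seq in Hm; lia).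
      assert (HFl : (length (seq 1 (2 - 1)) <= 2 - 1)%nat) by (rewrite length_seq; lia).
      assert (HK2' : c22 * INR K ^ (2 - 1 + 1) <= Rpower X (w - INR (n - 2))).
      { apply (mono_c2 c22 (Rmax c21 c22)); [apply Rmax_r|exact HKk|exact HK2]. }
      assert (Hpr : Rabs (poly ra 2 et) <= Rabs et ^ 2 * Rpower X (- w)).
      { unfold ra, et. rewrite poly_rev by exact Hxi. rewrite Rabs_mult, <- RPow_abs.
        apply Rmult_le_compat_l; [apply pow_le; apply Rabs_pos|exact Hp2]. }
      assert (HHX : INR H <= X) by (rewrite HHR; apply Hp3; lia).
      assert (HA := Hea2 X ra H _ HX1 HH HHX HaB HFm HFl HS Hpr K HK HK2').
      assert (Hsmall : C2 / INR K <= Rabs (/ xi) ^ n / 2).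
      { apply K1_bound; [apply pow_lt; apply Rabs_pos_lt; exact Het|lra|exact HK1]. }
      assert (HR := Hrev _ _ Hsmall HA).
      eapply Approx_mono; [| |exact HR].
      * unfold Rdiv. rewrite <- Rmult_assoc. apply Rmult_le_compat_r; [left; apply Rinv_0_lt_compat; lra|apply Rmax_r].
      * rewrite <- !Rmult_assoc. apply Rmult_le_compat_r; [apply pow_le; lra|].
        apply Rmult_le_compat_r; [apply pow_le; lra|apply Rmax_r].
    +
      exfalso.
      assert (S3 : INR B * x2 < x1 /\ INR B * x0 < x1).
      { destruct (Rle_dec x1 (INR B * x2)); destruct (Rle_dec x0 (INR B * x2));
        destruct (Rle_dec x1 (INR B * x0)); destruct (Rle_dec x2 (INR B * x0)); try tauto;
        assert (x0 <= INR B * x0) by (replace x0 with (1 * x0) at 1 by ring; apply Rmult_le_compat_r; lra);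
        assert (x2 <= INR B * x2) by (replace x2 with (1 * x2) at 1 by ring; apply Rmult_le_compat_r; lra); split; lra. }
      destruct S3 as [S3 S3'].
      assert (Hx1 : 1 <= x1).
      { assert (Ha1 : a 1%nat <> 0%Z).
        { intro E. assert (E1 : x1 = 0) by (unfold x1; rewrite E; apply Rabs_R0). rewrite E1 in S3, S3'.
          assert (0 <= INR B * x0) by (apply Rmult_le_pos; lra). lra. }
        apply Rabs_IZR_ge1; exact Ha1. }
      assert (Hpoly : poly a 2 xi = IZR (a 1%nat) * xi + (IZR (a 0%nat) + IZR (a 2%nat) * (xi * xi))) by (unfold poly; simpl; ring).
      assert (Hlow : x1 * Rabs xi - (x0 + x2 * (xi * xi)) <= Rabs (poly a 2 xi)).
      { rewrite Hpoly.
        set (u := IZR (a 1%nat) * xi). set (v := IZR (a 0%nat) + IZR (a 2%nat) * (xi * xi)).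
        assert (T := Rabs_triang (u + v) (- v)). replace (u + v + - v) with u in T by ring. rewrite Rabs_Ropp in T.
        assert (Hv : Rabs v <= x0 + x2 * (xi * xi)).
        { unfold v. eapply Rle_trans; [apply Rabs_triang|]. rewrite Rabs_mult. fold x0 x2.
          rewrite (Rabs_right (xi * xi)) by (apply Rle_ge; apply Rle_0_sqr). lra. }
        assert (Hu : Rabs u = x1 * Rabs xi) by (unfold u; rewrite Rabs_mult; reflexivity).
        lra. }
      assert (Hxx : 0 <= xi * xi) by apply Rle_0_sqr.
      assert (Hsm : INR B * (x0 + x2 * (xi * xi)) <= x1 * (xi * xi + 1)).
      { assert (INR B * x2 * (xi * xi) <= x1 * (xi * xi)) by (apply Rmult_le_compat_r; lra). lra. }
      assert (HB2 : 2 * (xi * xi + 1) <= INR B * Rabs xi).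
      { unfold Rdiv in HBr. apply Rmult_le_compat_r with (r := Rabs xi) in HBr; [|lra].
        rewrite Rmult_assoc, Rinv_l, Rmult_1_r in HBr by lra. lra. }
      assert (Hq : x0 + x2 * (xi * xi) <= x1 * Rabs xi / 2).
      { apply Rmult_le_reg_l with (INR B); [lra|].
        assert (x1 * (2 * (xi * xi + 1)) <= x1 * (INR B * Rabs xi)) by (apply Rmult_le_compat_l; lra).
        lra. }
      assert (Hbig : 4 / Rabs xi <= Rpower X w) by (apply large_pow; assumption).
      assert (Hsm2 : Rpower X (- w) <= Rabs xi / 4).
      { rewrite Rpower_Ropp. assert (HP := Rpower_pos X w).
        apply Rmult_le_reg_l with (Rpower X w); [lra|]. rewrite Rinv_r by lra.
        apply Rmult_le_compat_r with (r := Rabs xi / 4) in Hbig; [|lra].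
        replace (4 / Rabs xi * (Rabs xi / 4)) with 1 in Hbig by (field; lra). lra. }
      assert (Rabs xi <= x1 * Rabs xi) by (replace (Rabs xi) with (1 * Rabs xi) at 1 by ring; apply Rmult_le_compat_r; lra).
      lra.
Qed.

Lemma part2 k n xi : (2 <= k)%nat -> (k <= n)%nat -> transcendental xi -> (k = 2%nat \/ n = (k + 1)%nat) ->
  Rbar_le (rhs k n (w_exp k xi)) (lambda_exp n xi).
Proof.
  intros Hk Hkn Ht Hcase. assert (Hxi := transc_nz xi Ht).
  unfold w_exp. apply part_generic; [lia| apply w_set_m1; exact Hxi|].
  intros w lam Hw Hl HD Hc. apply (key_branches k n xi w lam); try assumption; try lia.
  destruct Hcase as [-> | ->].
  - apply br_k2; [lia|exact Hxi|].
    assert (Hn2 : 2 <= INR n) by (apply (le_INR 2); lia).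
    assert (0 < lam * ((INR 2 - 1) * w + INR n)) by (apply Rmult_lt_0_compat; assumption).
    simpl in *. lra.
  - apply br_nk1; [lia|exact Hxi].
Qed.

Theorem theorem3p1 (k n : nat) (xi : R) :
  (2 <= k)%nat -> (k <= n)%nat -> transcendental xi ->
  Rbar_le (rhs k n (w_lead_exp k xi)) (lambda_exp n xi) /\
  ((k = 2%nat \/ n = (k + 1)%nat) ->
     Rbar_le (rhs k n (w_exp k xi)) (lambda_exp n xi)).
Proof.
  intros Hk Hkn Ht. split.
  - apply part1; assumption.
  - intros Hc. apply part2; assumption.
Qed.
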